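(* Let $\gamma(s)$ be an arc-length parametrized triharmonic curve with vanishing torsion immersed in a BCV space $M(a,b)$ with $4a\neq b^2$. Then either $\gamma$ is a geodesic, or $\gamma$ is a Frenet helix whose constant curvature $\kappa_o$ satisfies $$\kappa_o^2=2\left(\frac{b^2}{4}+\left[4a-b^2\right]B_3^2\right),$$ where $B_3=\langle B,E_3\rangle$ is constant along $\gamma$ and satisfies $B_3^2<\dfrac{b^2}{4(b^2-4a)}$ if $b^2>4a$, and $B_3\neq 0$ if $b^2<4a$. In particular, there are no proper triharmonic curves with vanishing torsion in the product space $\mathbb{H}^2(4a)\times\mathbb{R}$ (i.e. $M(a,0)$ with $a<0$).
   Context: For real $a,b$, the BCV space $M(a,b)$ is $\{(x,y,z)\in\mathbb{R}^3:\lambda_a=1+a(x^2+y^2)>0\}$ with the metric $$g_{a,b}=\frac{dx^2+dy^2}{[1+a(x^2+y^2)]^2}+\left(dz+\frac{b}{2}\,\frac{y\,dx-x\,dy}{1+a(x^2+y^2)}\right)^2,$$ with orthonormal frame $E_1=\lambda_a\partial_x-\frac{by}{2}\partial_z$, $E_2=\lambda_a\partial_y+\frac{bx}{2}\partial_z$, $E_3=\partial_z$. For an arc-length parametrized curve $\gamma$ with $T=\gamma'$ in a Riemannian manifold with Levi-Civita connection $\nabla$ and curvature tensor $R^M(X,Y)=\nabla_X\nabla_Y-\nabla_Y\nabla_X-\nabla_{[X,Y]}$, $\gamma$ is triharmonic if $\nabla_T^5T+R^M(\nabla_T^3T,T)T-R^M(\nabla_T^2T,\nabla_TT)T=0$;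 proper means not a geodesic. For a non-geodesic curve, the Frenet frame $\{T,N,B\}$ (with $B=T\times N$), curvature $\kappa$ and torsion $\tau$ are given by $\nabla_TT=\kappa N$, $\nabla_TN=-\kappa T+\tau B$, $\nabla_TB=-\tau N$. A Frenet helix is a curve with constant curvature and constant torsion. *)

(* Defs.v *)
From Stdlib Require Import Reals Lra Arith.
From Coquelicot Require Import Coquelicot.
Open Scope R_scope.

(** Points of R^3 and (coordinate) tangent vectors are represented as
    functions [nat -> R]; only the indices 0,1,2 (x,y,z) are ever used. *)
Definition vec := nat -> R.

Definition sum3 (f : nat -> R) : R := f 0%nat + f 1%nat + f 2%nat.

Definition lam (a : R) (p : vec) : R := 1 + a * (p 0%nat ^ 2 + p 1%nat ^ 2).

Definition inBCV (a : R) (p : vec) : Prop := 0 < lam a p.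

(** Coordinate components g_ij of
    g = (dx^2+dy^2)/lam^2 + (dz + (b/2) (y dx - x dy)/lam)^2.
    Write omega = dz + w_0 dx + w_1 dy with w_0 = b y/(2 lam), w_1 = - b x/(2 lam). *)
Definition omc (a b : R) (i : nat) (p : vec) : R :=
  match i with
  | 0%nat => b / 2 * p 1%nat / lam a p
  | 1%nat => - (b / 2 * p 0%nat / lam a p)
  | _ => 1
  end.

Definition flatc (a : R) (i j : nat) (p : vec) : R :=
  match i, j with
  | 0%nat, 0%nat => / (lam a p ^ 2)
  | 1%nat, 1%nat => / (lam a p ^ 2)
  | _, _ => 0
  end.

Definition gm (a b : R) (i j : nat) (p : vec) : R :=
  flatc a i j p + omc a b i p * omc a b j p.

Definition m3 (m : nat -> nat -> R) (i j : nat) : R := m (i mod 3)%nat (j mod 3)%nat.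
Definition cof3 (m : nat -> nat -> R) (i j : nat) : R :=
  m3 m (i+1) (j+1) * m3 m (i+2) (j+2) - m3 m (i+1) (j+2) * m3 m (i+2) (j+1).
Definition det3 (m : nat -> nat -> R) : R := sum3 (fun j => m 0%nat j * cof3 m 0%nat j).
Definition inv3 (m : nat -> nat -> R) (i j : nat) : R := cof3 m j i / det3 m.

Definition ginv (a b : R) (i j : nat) (p : vec) : R :=
  inv3 (fun k l => gm a b k l p) i j.

Definition pd (k : nat) (f : vec -> R) (p : vec) : R :=
  Derive (fun t => f (fun i => if Nat.eqb i k then p i + t else p i)) 0.

(** Christoffel symbols of the Levi-Civita connection:
    nabla_{d_i} d_j = sum_k Gam k i j d_k *)
Definition Gam (a b : R) (k i j : nat) (p : vec) : R :=
  / 2 * sum3 (fun l => ginv a b k l p *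
     (pd i (gm a b j l) p + pd j (gm a b i l) p - pd l (gm a b i j) p)).

(** Curvature R(d_i,d_j) d_k = sum_l Rc l i j k d_l, with the convention
    R(X,Y) = nabla_X nabla_Y - nabla_Y nabla_X - nabla_[X,Y]. *)
Definition Rc (a b : R) (l i j k : nat) (p : vec) : R :=
  pd i (Gam a b l j k) p - pd j (Gam a b l i k) p
  + sum3 (fun m => Gam a b m j k p * Gam a b l i m p - Gam a b m i k p * Gam a b l j m p).

Definition Rm (a b : R) (p : vec) (X Y Z : vec) : vec :=
  fun l => sum3 (fun i => sum3 (fun j => sum3 (fun k =>
             X i * Y j * Z k * Rc a b l i j k p))).

Definition inner (a b : R) (p : vec) (X Y : vec) : R :=
  sum3 (fun i => sum3 (fun j => gm a b i j p * X i * Y j)).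

Definition vel (gam : R -> vec) : R -> vec := fun s i => Derive (fun t => gam t i) s.

Definition cov (a b : R) (gam : R -> vec) (W : R -> vec) : R -> vec :=
  fun s k => Derive (fun t => W t k) s
    + sum3 (fun i => sum3 (fun j => Gam a b k i j (gam s) * vel gam s i * W s j)).

Definition nabT (a b : R) (gam : R -> vec) (n : nat) : R -> vec :=
  Nat.iter n (cov a b gam) (vel gam).

(** Frame components w.r.t. E1 = lam d_x - (b y/2) d_z, E2 = lam d_y + (b x/2) d_z,
    E3 = d_z, and back. *)
Definition toframe (a b : R) (p : vec) (X : vec) : vec :=
  fun i => match i with
  | 0%nat => X 0%nat / lam a p
  | 1%nat => X 1%nat / lam a p
  | _ => X 2%nat + b * p 1%nat / 2 * (X 0%nat / lam a p) - b * p 0%nat / 2 * (X 1%nat / lam a p)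
  end.
Definition fromframe (a b : R) (p : vec) (c : vec) : vec :=
  fun i => match i with
  | 0%nat => lam a p * c 0%nat
  | 1%nat => lam a p * c 1%nat
  | _ => - (b * p 1%nat / 2) * c 0%nat + b * p 0%nat / 2 * c 1%nat + c 2%nat
  end.

(** cross product X x Y (orientation given by the orthonormal frame E1,E2,E3) *)
Definition cross (a b : R) (p : vec) (X Y : vec) : vec :=
  let u := toframe a b p X in let v := toframe a b p Y in
  fromframe a b p (fun i => match i with
    | 0%nat => u 1%nat * v 2%nat - u 2%nat * v 1%nat
    | 1%nat => u 2%nat * v 0%nat - u 0%nat * v 2%nat
    | _ => u 0%nat * v 1%nat - u 1%nat * v 0%nat
    end).

Definition E3 : vec := fun i => if Nat.eqb i 2 then 1 else 0.

Definition curv (a b : R) (gam : R -> vec) (s : R) : R :=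
  sqrt (inner a b (gam s) (nabT a b gam 1 s) (nabT a b gam 1 s)).
Definition frN (a b : R) (gam : R -> vec) : R -> vec :=
  fun s i => nabT a b gam 1 s i / curv a b gam s.
Definition frB (a b : R) (gam : R -> vec) : R -> vec :=
  fun s => cross a b (gam s) (vel gam s) (frN a b gam s).
Definition tors (a b : R) (gam : R -> vec) (s : R) : R :=
  inner a b (gam s) (cov a b gam (frN a b gam) s) (frB a b gam s).
Definition B3 (a b : R) (gam : R -> vec) (s : R) : R :=
  inner a b (gam s) (frB a b gam s) E3.

Definition inI (lo hi : Rbar) (s : R) : Prop := Rbar_lt lo s /\ Rbar_lt s hi.

Definition arclength_curve (a b : R) (lo hi : Rbar) (gam : R -> vec) : Prop :=
  Rbar_lt lo hi /\
  (forall s, inI lo hi s -> inBCV a (gam s)) /\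
  (forall i n s, (i < 3)%nat -> inI lo hi s -> ex_derive_n (fun t => gam t i) n s) /\
  (forall s, inI lo hi s -> inner a b (gam s) (vel gam s) (vel gam s) = 1).

Definition triharmonic (a b : R) (lo hi : Rbar) (gam : R -> vec) : Prop :=
  forall s, inI lo hi s -> forall l, (l < 3)%nat ->
    nabT a b gam 5 s l
    + Rm a b (gam s) (nabT a b gam 3 s) (vel gam s) (vel gam s) l
    - Rm a b (gam s) (nabT a b gam 2 s) (nabT a b gam 1 s) (vel gam s) l = 0.

(** vanishing torsion: tau = 0 wherever the Frenet frame is defined (kappa <> 0) *)
Definition zero_torsion (a b : R) (lo hi : Rbar) (gam : R -> vec) : Prop :=
  forall s, inI lo hi s -> curv a b gam s <> 0 -> tors a b gam s = 0.

Definition geodesic (a b : R) (lo hi : Rbar) (gam : R -> vec) : Prop :=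
  forall s, inI lo hi s -> forall l, (l < 3)%nat -> nabT a b gam 1 s l = 0.

(* Main.v *)
Require Import Defs.
From Stdlib Require Import Reals Lra Lia Classical.
From Coquelicot Require Import Coquelicot.
Open Scope R_scope.

Definition shift (k : nat) (p : vec) (t : R) : vec :=
  fun i => if Nat.eqb i k then p i + t else p i.

Lemma pd_shift k f p : pd k f p = Derive (fun t => f (shift k p t)) 0.
Proof. reflexivity. Qed.

Lemma cont_locally_nz (f : R -> R) x : continuous f x -> f x <> 0 ->
  locally x (fun t => f t <> 0).
Proof.
  intros Hc Hn.
  assert (He : 0 < Rabs (f x)) by (apply Rabs_pos_lt; auto).
  pose proof (proj1 (filterlim_locally f (f x)) Hc (mkposreal _ He)) as H.
  eapply filter_imp; [|exact H].
  intros t Ht Hz. unfold ball in Ht; simpl in Ht. unfold AbsRing_ball, abs, minus, plus, opp in Ht; simpl in Ht.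
  rewrite Hz in Ht. replace (0 + - f x) with (- f x) in Ht by ring.
  rewrite Rabs_Ropp in Ht. lra.
Qed.

Definition GamE (a b : R) (k i j : nat) (p : vec) : R :=
  let x := p 0%nat in let y := p 1%nat in let L := lam a p in
  match k, i, j with
  | 0%nat, 0%nat, 0%nat => -2 * a * x / L
  | 0%nat, 0%nat, 1%nat | 0%nat, 1%nat, 0%nat => (-2 * a + b^2/4) * y / L
  | 0%nat, 1%nat, 1%nat => (2 * a - b^2/2) * x / L
  | 0%nat, 1%nat, 2%nat | 0%nat, 2%nat, 1%nat => b / 2
  | 1%nat, 0%nat, 0%nat => (2 * a - b^2/2) * y / L
  | 1%nat, 0%nat, 1%nat | 1%nat, 1%nat, 0%nat => (-2 * a + b^2/4) * x / L
  | 1%nat, 0%nat, 2%nat | 1%nat, 2%nat, 0%nat => - (b / 2)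
  | 1%nat, 1%nat, 1%nat => -2 * a * y / L
  | 2%nat, 0%nat, 0%nat => x * y * b * (a - b^2/4) / L^2
  | 2%nat, 0%nat, 1%nat | 2%nat, 1%nat, 0%nat => b / 2 * (a - b^2/4) * (y^2 - x^2) / L^2
  | 2%nat, 0%nat, 2%nat | 2%nat, 2%nat, 0%nat => - (b^2 * x / 4 / L)
  | 2%nat, 1%nat, 1%nat => - (x * y * b * (a - b^2/4) / L^2)
  | 2%nat, 1%nat, 2%nat | 2%nat, 2%nat, 1%nat => - (b^2 * y / 4 / L)
  | _, _, _ => 0
  end.

Ltac nzl Hl :=
  match goal with |- ?X <> 0 =>
    first [ assert (X = lam _ _) as -> by (unfold lam; simpl; ring); exact Hl
          | apply Rmult_integral_contrapositive_currified; nzl Hl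
          | apply pow_nonzero; nzl Hl
          | apply Rinv_neq_0_compat; nzl Hl
          | lra ]
  end.

Ltac eval_pd Hl :=
  match goal with |- context[pd ?k ?f ?p] =>
    let e := fresh "e" in evar (e : R);
    let H := fresh in assert (H : pd k f p = e);
    [ unfold pd, GamE, gm, flatc, omc; unfold lam; simpl; apply is_derive_unique; auto_derive;
      [ repeat split; try nzl Hl | subst e; reflexivity ] | ];
    subst e; rewrite H; clear H
  end.

Lemma det_val a b p : lam a p <> 0 -> det3 (fun k l => gm a b k l p) = / (lam a p ^ 4).
Proof.
  intros Hl. unfold det3, cof3, m3, sum3, gm, flatc, omc; simpl. unfold lam in *. field; auto.
Qed.

Lemma ginv_val a b p : lam a p <> 0 -> forall k l, (k < 3)%nat -> (l < 3)%nat ->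
  ginv a b k l p = match k, l with
   | 0, 0 => lam a p ^ 2 | 1, 1 => lam a p ^2
   | 0, 2 | 2, 0 => - (lam a p * b * p 1%nat / 2)
   | 1, 2 | 2, 1 => lam a p * b * p 0%nat / 2
   | 2, 2 => 1 + b^2 * (p 0%nat ^2 + p 1%nat ^2) / 4
   | _, _ => 0 end.
Proof.
  intros Hl k l Hk Hl'.
  unfold ginv, inv3. rewrite det_val by auto.
  unfold cof3, m3, gm, flatc, omc.
  destruct k as [|[|[|k]]]; try lia; destruct l as [|[|[|l]]]; try lia; simpl;
  unfold lam in *; field; auto.
Qed.

Lemma Gam_val a b p : lam a p <> 0 -> forall k i j, (k < 3)%nat -> (i < 3)%nat -> (j < 3)%nat ->
  Gam a b k i j p = GamE a b k i j p.
Proof.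
  intros Hl k i j Hk Hi Hj.
  unfold Gam, sum3.
  rewrite !ginv_val by (auto; lia).
  destruct k as [|[|[|k]]]; try lia; destruct i as [|[|[|i]]]; try lia;
  destruct j as [|[|[|j]]]; try lia;
  repeat eval_pd Hl; unfold GamE, lam in *; simpl; field; auto.
  all: let Hz := fresh in intro Hz; apply Hl; rewrite <- Hz; ring.
Qed.

Lemma lam_shift_locally a p i : lam a p <> 0 -> locally 0 (fun t => lam a (shift i p t) <> 0).
Proof.
  intros Hl. apply (cont_locally_nz (fun t => lam a (shift i p t)) 0).
  - apply (@ex_derive_continuous R_AbsRing R_NormedModule).
    unfold lam, shift; destruct i as [|[|i]]; simpl; auto_derive; auto.
  - unfold lam, shift in *; destruct i as [|[|i]]; simpl; rewrite ?Rplus_0_r; auto.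
Qed.

Lemma pd_Gam a b p i l j k : lam a p <> 0 -> (l < 3)%nat -> (j < 3)%nat -> (k < 3)%nat ->
  pd i (Gam a b l j k) p = pd i (GamE a b l j k) p.
Proof.
  intros Hl Hl' Hj Hk. unfold pd. apply Derive_ext_loc.
  eapply filter_imp; [|apply (lam_shift_locally a p i Hl)].
  intros t Ht. apply Gam_val; auto.
Qed.

Definition dl (l i : nat) : R := if Nat.eqb l i then 1 else 0.

Definition RcE (a b : R) (l i j k : nat) (p : vec) : R :=
  b^2/4 * (gm a b j k p * dl l i - gm a b i k p * dl l j)
  + (4*a - b^2) * (flatc a j k p * (dl l i - omc a b i p * dl l 2)
                   - flatc a i k p * (dl l j - omc a b j p * dl l 2)).

Lemma Rc_val a b p : lam a p <> 0 -> forall l i j k, (l < 3)%nat -> (i < 3)%nat -> (j < 3)%nat -> (k < 3)%nat ->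
  Rc a b l i j k p = RcE a b l i j k p.
Proof.
  intros Hl l i j k Hl' Hi Hj Hk.
  unfold Rc, sum3.
  rewrite !pd_Gam by (auto; lia).
  rewrite !Gam_val by (auto; lia).
  destruct l as [|[|[|l]]]; try lia; destruct i as [|[|[|i]]]; try lia;
  destruct j as [|[|[|j]]]; try lia; destruct k as [|[|[|k]]]; try lia;
  repeat eval_pd Hl; unfold RcE, dl, GamE, gm, flatc, omc in *; unfold lam in *; simpl; field; auto.
  all: let Hz := fresh in intro Hz; apply Hl; rewrite <- Hz; ring.
Qed.

Definition mk3 (u0 u1 u2 : R) : vec := fun i => match i with 0%nat => u0 | 1%nat => u1 | _ => u2 end.
Definition dot (u v : vec) : R := u 0%nat * v 0%nat + u 1%nat * v 1%nat + u 2%nat * v 2%nat.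
Definition crs (u v : vec) : vec :=
  mk3 (u 1%nat * v 2%nat - u 2%nat * v 1%nat) (u 2%nat * v 0%nat - u 0%nat * v 2%nat) (u 0%nat * v 1%nat - u 1%nat * v 0%nat).
Definition hz (u : vec) : vec := mk3 (u 0%nat) (u 1%nat) 0.
Definition Rf (a b : R) (u v w : vec) : vec := fun i =>
  b^2/4 * (dot v w * u i - dot u w * v i) + (4*a - b^2) * (dot (hz v) (hz w) * hz u i - dot (hz u) (hz w) * hz v i).
Definition mu (a b : R) (p t : vec) : vec :=
  mk3 (b/2 * t 0%nat) (b/2 * t 1%nat) (- (-2 * a * p 1%nat * t 0%nat + 2 * a * p 0%nat * t 1%nat + b/2 * t 2%nat)).
Definition covF (a b : R) (p t w dw : vec) : vec := fun i => dw i + crs (mu a b p t) w i.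

Lemma inner_frame a b p X Y : lam a p <> 0 ->
  inner a b p X Y = dot (toframe a b p X) (toframe a b p Y).
Proof. intros Hl. unfold inner, dot, sum3, toframe, gm, flatc, omc; simpl. field. auto. Qed.

Lemma to_from a b p c i : lam a p <> 0 -> (i < 3)%nat -> toframe a b p (fromframe a b p c) i = c i.
Proof.
  intros Hl Hi. destruct i as [|[|[|i]]]; try lia; unfold toframe, fromframe; simpl; field; auto.
Qed.

Lemma from_to a b p X i : lam a p <> 0 -> (i < 3)%nat -> fromframe a b p (toframe a b p X) i = X i.
Proof.
  intros Hl Hi. destruct i as [|[|[|i]]]; try lia; unfold toframe, fromframe; simpl; field; auto.
Qed.

Lemma cross_frame a b p X Y i : lam a p <> 0 -> (i < 3)%nat ->
  toframe a b p (cross a b p X Y) i = crs (toframe a b p X) (toframe a b p Y) i.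
Proof.
  intros Hl Hi. unfold cross. rewrite to_from by auto.
  destruct i as [|[|[|i]]]; try lia; reflexivity.
Qed.

Lemma Rm_frame a b p X Y Z i : lam a p <> 0 -> (i < 3)%nat ->
  toframe a b p (Rm a b p X Y Z) i = Rf a b (toframe a b p X) (toframe a b p Y) (toframe a b p Z) i.
Proof.
  intros Hl Hi.
  destruct i as [|[|[|i]]]; try lia; unfold toframe, Rm, sum3; simpl;
  rewrite !Rc_val by (auto; lia);
  unfold RcE, dl, Rf, dot, hz, mk3, gm, flatc, omc; simpl; unfold lam in *; field; auto.
Qed.

Definition dFF (a b : R) (p v c dc : vec) : vec :=
  mk3 (2*a*(p 0%nat * v 0%nat + p 1%nat * v 1%nat) * c 0%nat + lam a p * dc 0%nat)
      (2*a*(p 0%nat * v 0%nat + p 1%nat * v 1%nat) * c 1%nat + lam a p * dc 1%nat)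
      (- (b * v 1%nat / 2) * c 0%nat - b * p 1%nat / 2 * dc 0%nat + b * v 0%nat / 2 * c 1%nat
        + b * p 0%nat / 2 * dc 1%nat + dc 2%nat).

Definition dvec (w : R -> vec) (s : R) : vec := fun i => Derive (fun u => w u i) s.

Ltac eta_D := repeat match goal with |- context [Derive (fun x => ?f x) ?s] => change (Derive (fun x => f x) s) with (Derive f s) end.

Lemma D_from a b (G w : R -> vec) s k : (k < 3)%nat ->
  ex_derive (fun u => G u 0%nat) s -> ex_derive (fun u => G u 1%nat) s ->
  (forall i, (i < 3)%nat -> ex_derive (fun u => w u i) s) ->
  Derive (fun u => fromframe a b (G u) (w u) k) s = dFF a b (G s) (dvec G s) (w s) (dvec w s) k.
Proof.
  intros Hk H0 H1 Hw.
  pose (g0 := fun u => G u 0%nat). pose (g1 := fun u => G u 1%nat).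
  pose (w0 := fun u => w u 0%nat). pose (w1 := fun u => w u 1%nat). pose (w2 := fun u => w u 2%nat).
  assert (E0 : ex_derive w0 s) by (apply Hw; lia).
  assert (E1 : ex_derive w1 s) by (apply Hw; lia).
  assert (E2 : ex_derive w2 s) by (apply Hw; lia).
  change (ex_derive g0 s) in H0. change (ex_derive g1 s) in H1.
  unfold dFF, dvec, mk3.
  destruct k as [|[|[|k]]]; try lia.
  - change (fun u => fromframe a b (G u) (w u) 0%nat) with (fun u => (1 + a * (g0 u ^2 + g1 u ^2)) * w0 u).
    change (Derive (fun u => G u 0%nat) s) with (Derive g0 s).
    change (Derive (fun u => G u 1%nat) s) with (Derive g1 s).
    change (Derive (fun u => w u 0%nat) s) with (Derive w0 s).
    change (w s 0%nat) with (w0 s). change (G s 0%nat) with (g0 s). change (G s 1%nat) with (g1 s).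
    unfold lam. change (G s 0%nat) with (g0 s). change (G s 1%nat) with (g1 s).
    apply is_derive_unique. auto_derive; [repeat split; auto | eta_D; ring].
  - change (fun u => fromframe a b (G u) (w u) 1%nat) with (fun u => (1 + a * (g0 u ^2 + g1 u ^2)) * w1 u).
    change (Derive (fun u => G u 0%nat) s) with (Derive g0 s).
    change (Derive (fun u => G u 1%nat) s) with (Derive g1 s).
    change (Derive (fun u => w u 1%nat) s) with (Derive w1 s).
    change (w s 1%nat) with (w1 s).
    unfold lam. change (G s 0%nat) with (g0 s). change (G s 1%nat) with (g1 s).
    apply is_derive_unique. auto_derive; [repeat split; auto | eta_D; ring].
  - change (fun u => fromframe a b (G u) (w u) 2%nat) with
      (fun u => - (b * g1 u / 2) * w0 u + b * g0 u / 2 * w1 u + w2 u).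
    change (Derive (fun u => G u 0%nat) s) with (Derive g0 s).
    change (Derive (fun u => G u 1%nat) s) with (Derive g1 s).
    change (Derive (fun u => w u 0%nat) s) with (Derive w0 s).
    change (Derive (fun u => w u 1%nat) s) with (Derive w1 s).
    change (Derive (fun u => w u 2%nat) s) with (Derive w2 s).
    change (w s 0%nat) with (w0 s). change (w s 1%nat) with (w1 s).
    change (G s 0%nat) with (g0 s). change (G s 1%nat) with (g1 s).
    apply is_derive_unique. auto_derive; [repeat split; auto | eta_D; field].
Qed.

Lemma cov_frame a b (gam W w : R -> vec) s :
  lam a (gam s) <> 0 ->
  (forall i, (i < 3)%nat -> ex_derive (fun u => gam u i) s) ->
  (forall i, (i < 3)%nat -> ex_derive (fun u => w u i) s) ->
  locally s (fun u => forall k, (k < 3)%nat -> W u k = fromframe a b (gam u) (w u) k) ->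
  forall k, (k < 3)%nat ->
  toframe a b (gam s) (cov a b gam W s) k =
  covF a b (gam s) (toframe a b (gam s) (vel gam s)) (w s) (dvec w s) k.
Proof.
  intros Hl Hg Hw Hloc.
  assert (HW : forall k, (k < 3)%nat -> W s k = fromframe a b (gam s) (w s) k).
  { exact (locally_singleton _ _ Hloc). }
  assert (Hc : forall k, (k < 3)%nat -> cov a b gam W s k =
     dFF a b (gam s) (dvec gam s) (w s) (dvec w s) k +
     sum3 (fun i => sum3 (fun j => GamE a b k i j (gam s) * vel gam s i * fromframe a b (gam s) (w s) j))).
  { intros k Hk. unfold cov. f_equal.
    - rewrite <- D_from by (auto; try apply Hg; lia).
      apply Derive_ext_loc. eapply filter_imp; [|exact Hloc]. intros u Hu. apply Hu; auto.
    - unfold sum3. rewrite !Gam_val by (auto; lia). rewrite !HW by lia. reflexivity. }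
  intros k Hk.
  destruct k as [|[|[|k]]]; try lia; unfold toframe at 1; rewrite ?Hc by lia;
  unfold covF, crs, mu, dFF, mk3, sum3, GamE, toframe, fromframe, vel, dvec; simpl;
  unfold lam in *; field; auto.
Qed.



Definition opn (U : R -> Prop) : Prop := forall s, U s -> locally s U.

Fixpoint Ck (n : nat) (f : R -> R) (U : R -> Prop) : Prop :=
  match n with
  | O => forall s, U s -> ex_derive f s
  | S m => (forall s, U s -> ex_derive f s) /\ Ck m (Derive f) U
  end.

Definition smooth (f : R -> R) (U : R -> Prop) : Prop := forall n, Ck n f U.

Lemma Ck_ex n f U : Ck n f U -> forall s, U s -> ex_derive f s.
Proof. destruct n; simpl; tauto. Qed.

Lemma Ck_down n f U : Ck (S n) f U -> Ck n f U.
Proof.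
  revert f; induction n; intros f H; simpl in *.
  - tauto.
  - destruct H as [H1 H2]. split; auto.
Qed.

Lemma Ck_ext U n f g : opn U -> Ck n f U -> (forall s, U s -> f s = g s) -> Ck n g U.
Proof.
  intros HU. revert f g; induction n; intros f g Hf Hfg; simpl in *.
  - intros s Hs. apply (ex_derive_ext_loc f g); [|auto].
    eapply filter_imp; [|exact (HU s Hs)]. auto.
  - destruct Hf as [H1 H2]. split.
    + intros s Hs. apply (ex_derive_ext_loc f g); [|auto].
      eapply filter_imp; [|exact (HU s Hs)]. auto.
    + apply (IHn (Derive f)); auto. intros s Hs. apply Derive_ext_loc.
      eapply filter_imp; [|exact (HU s Hs)]. auto.
Qed.

Lemma Ck_const U n c : opn U -> Ck n (fun _ => c) U.
Proof.
  intros HU. revert c; induction n; intros c; simpl.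
  - intros; apply (@ex_derive_const R_AbsRing R_NormedModule).
  - split. intros; apply (@ex_derive_const R_AbsRing R_NormedModule).
    apply (Ck_ext U n (fun _ => 0)); auto. intros s Hs. rewrite Derive_const. reflexivity.
Qed.

Lemma Ck_plus U n f g : opn U -> Ck n f U -> Ck n g U -> Ck n (fun s => f s + g s) U.
Proof.
  intros HU. revert f g; induction n; intros f g Hf Hg; simpl in *.
  - intros s Hs. apply (@ex_derive_plus R_AbsRing R_NormedModule f g); auto.
  - destruct Hf as [Hf1 Hf2]; destruct Hg as [Hg1 Hg2]. split.
    + intros s Hs. apply (@ex_derive_plus R_AbsRing R_NormedModule f g); auto.
    + apply (Ck_ext U n (fun s => Derive f s + Derive g s)); auto.
      intros s Hs. rewrite Derive_plus; auto.
Qed.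

Lemma Ck_mult U n f g : opn U -> Ck n f U -> Ck n g U -> Ck n (fun s => f s * g s) U.
Proof.
  intros HU. revert f g; induction n; intros f g Hf Hg.
  - simpl in *. intros s Hs. apply ex_derive_mult; auto.
  - pose proof (Ck_down _ _ _ Hf) as Hf'. pose proof (Ck_down _ _ _ Hg) as Hg'.
    simpl in Hf, Hg. destruct Hf as [Hf1 Hf2]; destruct Hg as [Hg1 Hg2]. split.
    + intros s Hs. apply ex_derive_mult; auto.
    + apply (Ck_ext U n (fun s => Derive f s * g s + f s * Derive g s)); auto.
      * apply Ck_plus; auto.
      * intros s Hs. rewrite Derive_mult; auto.
Qed.

Lemma Ck_opp U n f : opn U -> Ck n f U -> Ck n (fun s => - f s) U.
Proof.
  intros HU Hf. apply (Ck_ext U n (fun s => (-1) * f s)); auto.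
  apply Ck_mult; auto. apply Ck_const; auto. intros; ring.
Qed.

Lemma Ck_inv U n f : opn U -> Ck n f U -> (forall s, U s -> f s <> 0) -> Ck n (fun s => / f s) U.
Proof.
  intros HU. revert f; induction n; intros f Hf Hnz.
  - simpl in *. intros s Hs. apply (ex_derive_inv f s); auto.
  - pose proof (Ck_down _ _ _ Hf) as Hf'.
    simpl in Hf. destruct Hf as [Hf1 Hf2]. split.
    + intros s Hs. apply (ex_derive_inv f s); auto.
    + apply (Ck_ext U n (fun s => - (Derive f s * (/ f s * / f s)))); auto.
      * apply Ck_opp; auto. apply Ck_mult; auto. apply Ck_mult; auto.
      * intros s Hs. rewrite Derive_inv; auto. field. auto.
Qed.

Lemma Ck_sqrt U n f : opn U -> Ck n f U -> (forall s, U s -> 0 < f s) -> Ck n (fun s => sqrt (f s)) U.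
Proof.
  intros HU. revert f; induction n; intros f Hf Hp.
  - simpl in *. intros s Hs. pose proof (Hf s Hs). pose proof (Hp s Hs).
    auto_derive; auto.
  - pose proof (Ck_down _ _ _ Hf) as Hf'.
    simpl in Hf. destruct Hf as [Hf1 Hf2]. split.
    + intros s Hs. pose proof (Hf1 s Hs). pose proof (Hp s Hs). auto_derive; auto.
    + apply (Ck_ext U n (fun s => Derive f s * / (2 * sqrt (f s)))); auto.
      * apply Ck_mult; auto. apply Ck_inv; auto. apply Ck_mult; auto. apply Ck_const; auto.
        intros s Hs. pose proof (sqrt_lt_R0 _ (Hp s Hs)). lra.
      * intros s Hs. pose proof (Hf1 s Hs). pose proof (Hp s Hs).
        apply eq_sym, is_derive_unique. auto_derive; auto. eta_D. field.
        pose proof (sqrt_lt_R0 _ (Hp s Hs)). lra.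
Qed.

Lemma sm_ex f U s : smooth f U -> U s -> ex_derive f s.
Proof. intros H Hs. exact (Ck_ex 0 f U (H O) s Hs). Qed.
Lemma sm_D f U : smooth f U -> smooth (Derive f) U.
Proof. intros H n. exact (proj2 (H (S n))). Qed.
Lemma sm_ext U f g : opn U -> smooth f U -> (forall s, U s -> f s = g s) -> smooth g U.
Proof. intros HU H E n. apply (Ck_ext U n f); auto. Qed.
Lemma sm_const U c : opn U -> smooth (fun _ => c) U.
Proof. intros HU n. apply Ck_const; auto. Qed.
Lemma sm_plus U f g : opn U -> smooth f U -> smooth g U -> smooth (fun s => f s + g s) U.
Proof. intros HU Hf Hg n. apply Ck_plus; auto. Qed.
Lemma sm_mult U f g : opn U -> smooth f U -> smooth g U -> smooth (fun s => f s * g s) U.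
Proof. intros HU Hf Hg n. apply Ck_mult; auto. Qed.
Lemma sm_opp U f : opn U -> smooth f U -> smooth (fun s => - f s) U.
Proof. intros HU Hf n. apply Ck_opp; auto. Qed.
Lemma sm_minus U f g : opn U -> smooth f U -> smooth g U -> smooth (fun s => f s - g s) U.
Proof. intros HU Hf Hg. apply sm_plus; auto. apply sm_opp; auto. Qed.
Lemma sm_inv U f : opn U -> smooth f U -> (forall s, U s -> f s <> 0) -> smooth (fun s => / f s) U.
Proof. intros HU Hf Hn n. apply Ck_inv; auto. Qed.
Lemma sm_div U f g : opn U -> smooth f U -> smooth g U -> (forall s, U s -> g s <> 0) -> smooth (fun s => f s / g s) U.
Proof. intros HU Hf Hg Hn. apply sm_mult; auto. apply sm_inv; auto. Qed.
Lemma sm_sqrt U f : opn U -> smooth f U -> (forall s, U s -> 0 < f s) -> smooth (fun s => sqrt (f s)) U.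
Proof. intros HU Hf Hn n. apply Ck_sqrt; auto. Qed.
Lemma sm_pow U f k : opn U -> smooth f U -> smooth (fun s => f s ^ k) U.
Proof.
  intros HU Hf. induction k.
  - apply (sm_ext U (fun _ => 1)); auto. apply sm_const; auto.
  - apply (sm_ext U (fun s => f s * f s ^ k)); auto. apply sm_mult; auto.
Qed.
Lemma sm_cont f U s : smooth f U -> U s -> continuous f s.
Proof. intros H Hs. apply (@ex_derive_continuous R_AbsRing R_NormedModule). apply (sm_ex f U); auto. Qed.

Lemma sm_of_exn U g : (forall n s, U s -> ex_derive_n g n s) -> smooth g U.
Proof.
  intros H n. assert (forall m, Ck n (Derive_n g m) U); [|apply (H0 O)].
  induction n; intros m; simpl.
  - intros s Hs. exact (H (S m) s Hs).
  - split. intros s Hs. exact (H (S m) s Hs). exact (IHn (S m)).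
Qed.

Lemma sm_sub U V f : smooth f U -> (forall s, V s -> U s) -> smooth f V.
Proof.
  intros H HVU n. specialize (H n). revert f H. induction n; intros f H; simpl in *.
  - intros s Hs; auto.
  - destruct H as [H1 H2]; split; auto.
Qed.

Lemma opn_inI lo hi : opn (inI lo hi).
Proof.
  intros s [H1 H2].
  assert (Hd1 : exists d1, 0 < d1 /\ forall y, s - d1 < y -> Rbar_lt lo y).
  { destruct lo as [l| |]; simpl in *.
    - exists (s - l). split. lra. intros y Hy. simpl. lra.
    - contradiction.
    - exists 1. split. lra. intros; simpl; auto. }
  assert (Hd2 : exists d2, 0 < d2 /\ forall y, y < s + d2 -> Rbar_lt y hi).
  { destruct hi as [h| |]; simpl in *.
    - exists (h - s). split. lra. intros y Hy. simpl. lra.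
    - exists 1. split. lra. intros; simpl; auto.
    - contradiction. }
  destruct Hd1 as [d1 [Hd1 P1]]. destruct Hd2 as [d2 [Hd2 P2]].
  assert (He : 0 < Rmin d1 d2) by (apply Rmin_pos; auto).
  exists (mkposreal _ He). intros y Hy. simpl in Hy.
  unfold ball in Hy; simpl in Hy. unfold AbsRing_ball, abs, minus, plus, opp in Hy; simpl in Hy.
  apply Rabs_def2 in Hy. destruct Hy as [Hy1 Hy2].
  pose proof (Rmin_l d1 d2). pose proof (Rmin_r d1 d2).
  split; [apply P1 | apply P2]; lra.
Qed.

Ltac smt :=
  match goal with
  | |- smooth (fun _ => ?c) ?U => apply sm_const; assumption
  | |- smooth (fun s => @?f s + @?g s) ?U => apply (sm_plus U f g); [assumption|smt|smt]
  | |- smooth (fun s => @?f s - @?g s) ?U => apply (sm_minus U f g); [assumption|smt|smt]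
  | |- smooth (fun s => @?f s * @?g s) ?U => apply (sm_mult U f g); [assumption|smt|smt]
  | |- smooth (fun s => @?f s / @?g s) ?U => apply (sm_div U f g); [assumption|smt|smt|]
  | |- smooth (fun s => - @?f s) ?U => apply (sm_opp U f); [assumption|smt]
  | |- smooth (fun s => / @?f s) ?U => apply (sm_inv U f); [assumption|smt|]
  | |- smooth (fun s => @?f s ^ ?k) ?U => apply (sm_pow U f k); [assumption|smt]
  | |- smooth (fun s => sqrt (@?f s)) ?U => apply (sm_sqrt U f); [assumption|smt|]
  | |- smooth _ _ => assumption
  | |- _ => idtac
  end.

Definition tf (a b : R) (gam : R -> vec) (s : R) : vec := toframe a b (gam s) (vel gam s).

Fixpoint wf (a b : R) (gam : R -> vec) (n : nat) : R -> vec :=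
  match n with
  | O => tf a b gam
  | S m => fun s => covF a b (gam s) (tf a b gam s) (wf a b gam m s) (dvec (wf a b gam m) s)
  end.

Section Curve.
Variables (a b : R) (gam : R -> vec) (U : R -> Prop).
Hypothesis HU : opn U.
Hypothesis Hlam : forall s, U s -> lam a (gam s) <> 0.
Hypothesis Hgam : forall i, (i < 3)%nat -> smooth (fun s => gam s i) U.

Lemma tf_smooth i : (i < 3)%nat -> smooth (fun s => tf a b gam s i) U.
Proof.
  intros Hi.
  assert (G0 := Hgam 0 ltac:(lia)). assert (G1 := Hgam 1 ltac:(lia)). assert (G2 := Hgam 2 ltac:(lia)).
  assert (V0 : smooth (fun s => Derive (fun t => gam t 0%nat) s) U) by exact (sm_D _ _ G0).
  assert (V1 : smooth (fun s => Derive (fun t => gam t 1%nat) s) U) by exact (sm_D _ _ G1).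
  assert (V2 : smooth (fun s => Derive (fun t => gam t 2%nat) s) U) by exact (sm_D _ _ G2).
  unfold tf, toframe, vel, lam.
  destruct i as [|[|[|i]]]; try lia; smt; intros s Hs; first [apply (Hlam s Hs) | lra].
Qed.

Lemma wf_smooth n i : (i < 3)%nat -> smooth (fun s => wf a b gam n s i) U.
Proof.
  revert i. induction n; intros i Hi.
  - apply tf_smooth; auto.
  - assert (G0 := Hgam 0 ltac:(lia)). assert (G1 := Hgam 1 ltac:(lia)).
    assert (T0 := tf_smooth 0 ltac:(lia)). assert (T1 := tf_smooth 1 ltac:(lia)). assert (T2 := tf_smooth 2 ltac:(lia)).
    assert (W0 := IHn 0%nat ltac:(lia)). assert (W1 := IHn 1%nat ltac:(lia)). assert (W2 := IHn 2%nat ltac:(lia)).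
    assert (D0 : smooth (fun s => Derive (fun u => wf a b gam n u 0%nat) s) U) by exact (sm_D _ _ W0).
    assert (D1 : smooth (fun s => Derive (fun u => wf a b gam n u 1%nat) s) U) by exact (sm_D _ _ W1).
    assert (D2 : smooth (fun s => Derive (fun u => wf a b gam n u 2%nat) s) U) by exact (sm_D _ _ W2).
    simpl wf. unfold covF, dvec, crs, mu, mk3.
    destruct i as [|[|[|i]]]; try lia; smt.
Qed.

Lemma fromframe_ext p X Y k : (forall i, (i < 3)%nat -> X i = Y i) -> fromframe a b p X k = fromframe a b p Y k.
Proof.
  intros H. unfold fromframe. rewrite !H by lia. reflexivity.
Qed.

Lemma nabT_frame n s : U s -> forall k, (k < 3)%nat ->
  nabT a b gam n s k = fromframe a b (gam s) (wf a b gam n s) k.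
Proof.
  revert s. induction n; intros s Hs k Hk.
  - simpl. unfold tf. rewrite from_to; auto.
  - change (nabT a b gam (S n) s) with (cov a b gam (nabT a b gam n) s).
    rewrite <- (from_to a b (gam s) (cov a b gam (nabT a b gam n) s) k) by auto.
    apply fromframe_ext. intros i Hi.
    rewrite (cov_frame a b gam (nabT a b gam n) (wf a b gam n) s); auto.
    + intros j Hj. apply (sm_ex _ U); auto.
    + intros j Hj. apply (sm_ex _ U); auto. apply wf_smooth; auto.
    + eapply filter_imp; [|exact (HU s Hs)]. intros u Hu. apply IHn; auto.
Qed.

Lemma toframe_nabT n s : U s -> forall k, (k < 3)%nat ->
  toframe a b (gam s) (nabT a b gam n s) k = wf a b gam n s k.
Proof.
  intros Hs k Hk.
  transitivity (toframe a b (gam s) (fromframe a b (gam s) (wf a b gam n s)) k).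
  - destruct k as [|[|[|k]]]; try lia; unfold toframe; rewrite !(nabT_frame n s Hs) by lia; reflexivity.
  - apply to_from; auto.
Qed.

End Curve.

Lemma Dloc_const U f c : opn U -> (forall s, U s -> f s = c) -> forall s, U s -> Derive f s = 0.
Proof.
  intros HU H s Hs. rewrite (Derive_ext_loc f (fun _ => c)). apply Derive_const.
  eapply filter_imp; [|exact (HU s Hs)]. auto.
Qed.

Lemma D_dot (u v : R -> vec) s :
  (forall i, (i < 3)%nat -> ex_derive (fun r => u r i) s) ->
  (forall i, (i < 3)%nat -> ex_derive (fun r => v r i) s) ->
  Derive (fun r => dot (u r) (v r)) s = dot (dvec u s) (v s) + dot (u s) (dvec v s).
Proof.
  intros Hu Hv.
  pose (u0 := fun r => u r 0%nat). pose (u1 := fun r => u r 1%nat). pose (u2 := fun r => u r 2%nat).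
  pose (v0 := fun r => v r 0%nat). pose (v1 := fun r => v r 1%nat). pose (v2 := fun r => v r 2%nat).
  assert (ex_derive u0 s) by (apply Hu; lia). assert (ex_derive u1 s) by (apply Hu; lia).
  assert (ex_derive u2 s) by (apply Hu; lia). assert (ex_derive v0 s) by (apply Hv; lia).
  assert (ex_derive v1 s) by (apply Hv; lia). assert (ex_derive v2 s) by (apply Hv; lia).
  change (fun r => dot (u r) (v r)) with (fun r => u0 r * v0 r + u1 r * v1 r + u2 r * v2 r).
  unfold dot, dvec.
  change (Derive (fun r => u r 0%nat) s) with (Derive u0 s).
  change (Derive (fun r => u r 1%nat) s) with (Derive u1 s).
  change (Derive (fun r => u r 2%nat) s) with (Derive u2 s).
  change (Derive (fun r => v r 0%nat) s) with (Derive v0 s).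
  change (Derive (fun r => v r 1%nat) s) with (Derive v1 s).
  change (Derive (fun r => v r 2%nat) s) with (Derive v2 s).
  change (u s 0%nat) with (u0 s). change (u s 1%nat) with (u1 s). change (u s 2%nat) with (u2 s).
  change (v s 0%nat) with (v0 s). change (v s 1%nat) with (v1 s). change (v s 2%nat) with (v2 s).
  apply is_derive_unique. auto_derive; [repeat split; auto|]. eta_D. ring.
Qed.

Lemma dot_crs_skew m u v : dot (crs m u) v + dot u (crs m v) = 0.
Proof. unfold dot, crs, mk3; ring. Qed.

Lemma decomp t n V i : dot t t = 1 -> dot n n = 1 -> dot t n = 0 -> (i < 3)%nat ->
  V i = dot V t * t i + dot V n * n i + dot V (crs t n) * crs t n i.
Proof.
  intros Htt Hnn Htn Hi.
  assert (E : dot V t * (t i * dot n n - n i * dot t n) + dot V n * (n i * dot t t - t i * dot t n)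
              + dot V (crs t n) * crs t n i = (dot t t * dot n n - dot t n ^ 2) * V i).
  { destruct i as [|[|[|i]]]; try lia; unfold dot, crs, mk3; ring. }
  rewrite Htt, Hnn, Htn in E.
  transitivity ((1 * 1 - 0 ^ 2) * V i); [ring | rewrite <- E; ring].
Qed.

Definition Al2 (f0 : R -> R) r := - (f0 r ^ 2).
Definition Be2 (f1 : R -> R) r := f1 r.
Definition Al3 (f0 f1 : R -> R) r := -3 * f0 r * f1 r.
Definition Be3 (f0 f2 : R -> R) r := f2 r - f0 r ^ 3.
Definition Al4 (f0 f1 f2 : R -> R) r := -3 * f1 r ^ 2 - 4 * f0 r * f2 r + f0 r ^ 4.
Definition Be4 (f0 f1 f3 : R -> R) r := f3 r - 6 * f0 r ^ 2 * f1 r.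
Definition Al5 (f0 f1 f2 f3 : R -> R) r := -10 * f1 r * f2 r - 5 * f0 r * f3 r + 10 * f0 r ^ 3 * f1 r.
Definition Be5 (f0 f1 f2 f4 : R -> R) r := f4 r - 15 * f0 r * f1 r ^ 2 - 10 * f0 r ^ 2 * f2 r + f0 r ^ 5.

Section Ders.
Variables (f0 f1 f2 f3 f4 : R -> R) (s : R).
Hypothesis H0 : is_derive f0 s (f1 s).
Hypothesis H1 : is_derive f1 s (f2 s).
Hypothesis H2 : is_derive f2 s (f3 s).
Hypothesis H3 : is_derive f3 s (f4 s).
Let E0 : ex_derive f0 s := ex_intro _ _ H0.
Let E1 : ex_derive f1 s := ex_intro _ _ H1.
Let E2 : ex_derive f2 s := ex_intro _ _ H2.
Let E3 : ex_derive f3 s := ex_intro _ _ H3.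
Let D0 : Derive f0 s = f1 s := is_derive_unique _ _ _ H0.
Let D1 : Derive f1 s = f2 s := is_derive_unique _ _ _ H1.
Let D2 : Derive f2 s = f3 s := is_derive_unique _ _ _ H2.
Let D3 : Derive f3 s = f4 s := is_derive_unique _ _ _ H3.

Ltac dd := unfold Al2, Be2, Al3, Be3, Al4, Be4, Al5, Be5; apply is_derive_unique; auto_derive;
  [repeat split; auto | eta_D; rewrite ?D0, ?D1, ?D2, ?D3; ring].

Lemma dA2 : Derive (Al2 f0) s = -2 * f0 s * f1 s. Proof using H0 H1 H2 H3. dd. Qed.
Lemma dB2 : Derive (Be2 f1) s = f2 s. Proof using H0 H1 H2 H3. unfold Be2. exact D1. Qed.
Lemma dA3 : Derive (Al3 f0 f1) s = -3 * (f1 s * f1 s + f0 s * f2 s). Proof using H0 H1 H2 H3. dd. Qed.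
Lemma dB3 : Derive (Be3 f0 f2) s = f3 s - 3 * f0 s ^ 2 * f1 s. Proof using H0 H1 H2 H3. dd. Qed.
Lemma dA4 : Derive (Al4 f0 f1 f2) s = -10 * f1 s * f2 s - 4 * f0 s * f3 s + 4 * f0 s ^ 3 * f1 s. Proof using H0 H1 H2 H3. dd. Qed.
Lemma dB4 : Derive (Be4 f0 f1 f3) s = f4 s - 12 * f0 s * f1 s ^ 2 - 6 * f0 s ^ 2 * f2 s. Proof using H0 H1 H2 H3. dd. Qed.
Ltac ee := unfold Al2, Be2, Al3, Be3, Al4, Be4, Al5, Be5; auto_derive; repeat split; auto.
Lemma eA3 : ex_derive (Al3 f0 f1) s. Proof using H0 H1 H2 H3. ee. Qed.
Lemma eB3 : ex_derive (Be3 f0 f2) s. Proof using H0 H1 H2 H3. ee. Qed.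
Lemma eA4 : ex_derive (Al4 f0 f1 f2) s. Proof using H0 H1 H2 H3. ee. Qed.
Lemma eB4 : ex_derive (Be4 f0 f1 f3) s. Proof using H0 H1 H2 H3. ee. Qed.
End Ders.


Lemma Rf_nt a b t n i : dot t t = 1 -> dot n n = 1 -> dot t n = 0 -> (i < 3)%nat ->
  Rf a b n t t i = (b^2/4 + (4*a - b^2) * crs t n 2%nat ^ 2) * n i
                   + (- (4*a - b^2) * n 2%nat * crs t n 2%nat) * crs t n i.
Proof.
  intros Htt Hnn Htn Hi.
  rewrite (decomp t n (Rf a b n t t) i Htt Hnn Htn Hi).
  assert (I1 : dot (Rf a b n t t) t = 0).
  { unfold Rf; unfold dot, hz, mk3; simpl. field. }
  assert (I2 : dot (Rf a b n t t) n = b^2/4 * (dot t t * dot n n - dot t n ^ 2) + (4*a - b^2) * crs t n 2%nat ^ 2).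
  { unfold Rf; unfold dot, hz, crs, mk3; simpl. field. }
  assert (I3 : dot (Rf a b n t t) (crs t n) = (4*a - b^2) * (- dot t t * n 2%nat * crs t n 2%nat + dot t n * t 2%nat * crs t n 2%nat)).
  { unfold Rf; unfold dot, hz, crs, mk3; simpl. field. }
  rewrite I1, I2, I3, Htt, Hnn, Htn. field.
Qed.

Lemma crs_unit t n : dot t t = 1 -> dot n n = 1 -> dot t n = 0 -> dot (crs t n) (crs t n) = 1.
Proof.
  intros Htt Hnn Htn.
  assert (E : dot (crs t n) (crs t n) = dot t t * dot n n - dot t n ^ 2) by (unfold dot, crs, mk3; ring).
  rewrite E, Htt, Hnn, Htn. ring.
Qed.

Lemma crs_perp t n : dot t (crs t n) = 0 /\ dot n (crs t n) = 0.
Proof. split; unfold dot, crs, mk3; ring. Qed.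

Lemma Rf_lin a b u v w u' v' w' i : (i < 3)%nat ->
  (forall j, (j < 3)%nat -> u j = u' j) -> (forall j, (j < 3)%nat -> v j = v' j) ->
  (forall j, (j < 3)%nat -> w j = w' j) -> Rf a b u v w i = Rf a b u' v' w' i.
Proof.
  intros Hi Hu Hv Hw. unfold Rf; unfold dot, hz, mk3.
  rewrite !Hu, !Hv, !Hw by lia. destruct i as [|[|[|i]]]; try lia; rewrite ?Hu, ?Hv by lia; reflexivity.
Qed.


Definition kap (a b : R) (gam : R -> vec) (s : R) : R := sqrt (dot (wf a b gam 1 s) (wf a b gam 1 s)).
Definition nv (a b : R) (gam : R -> vec) (s : R) : vec := fun i => wf a b gam 1 s i / kap a b gam s.

Definition Bz (a b : R) (gam : R -> vec) (s : R) : R := crs (tf a b gam s) (nv a b gam s) 2%nat.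

Section Frenet.
Variables (a b : R) (gam : R -> vec) (U : R -> Prop).
Hypothesis HU : opn U.
Hypothesis Hlam : forall s, U s -> lam a (gam s) <> 0.
Hypothesis Hgam : forall i, (i < 3)%nat -> smooth (fun s => gam s i) U.
Hypothesis Hunit : forall s, U s -> dot (tf a b gam s) (tf a b gam s) = 1.
Hypothesis HK : forall s, U s -> 0 < dot (wf a b gam 1 s) (wf a b gam 1 s).
Hypothesis Htor : forall s, U s ->
  dot (covF a b (gam s) (tf a b gam s) (nv a b gam s) (dvec (nv a b gam) s)) (crs (tf a b gam s) (nv a b gam s)) = 0.

Notation tv := (tf a b gam).
Notation k := (kap a b gam).
Notation n := (nv a b gam).
Notation ms := (fun s => mu a b (gam s) (tf a b gam s)).

Lemma kap_smooth : smooth k U.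
Proof.
  assert (W0 := wf_smooth a b gam U HU Hlam Hgam 1 0 ltac:(lia)).
  assert (W1 := wf_smooth a b gam U HU Hlam Hgam 1 1 ltac:(lia)).
  assert (W2 := wf_smooth a b gam U HU Hlam Hgam 1 2 ltac:(lia)).
  apply (sm_ext U (fun s => sqrt (wf a b gam 1 s 0%nat * wf a b gam 1 s 0%nat + wf a b gam 1 s 1%nat * wf a b gam 1 s 1%nat + wf a b gam 1 s 2%nat * wf a b gam 1 s 2%nat))); auto.
  smt. intros s Hs. apply (HK s Hs).
Qed.

Lemma kap_pos s : U s -> 0 < k s.
Proof. intros Hs. unfold kap. apply sqrt_lt_R0. auto. Qed.

Lemma nv_smooth i : (i < 3)%nat -> smooth (fun s => n s i) U.
Proof.
  intros Hi. assert (W := wf_smooth a b gam U HU Hlam Hgam 1 i Hi). assert (Kk := kap_smooth).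
  unfold nv. smt. intros s Hs. pose proof (kap_pos s Hs). lra.
Qed.

Lemma tv_smooth i : (i < 3)%nat -> smooth (fun s => tv s i) U.
Proof. intros Hi. apply (wf_smooth a b gam U HU Hlam Hgam 0 i Hi). Qed.

Lemma w1_eq s i : U s -> (i < 3)%nat -> wf a b gam 1 s i = k s * n s i.
Proof. intros Hs Hi. unfold nv. pose proof (kap_pos s Hs). field. lra. Qed.

Lemma nn1 s : U s -> dot (n s) (n s) = 1.
Proof.
  intros Hs. pose proof (kap_pos s Hs) as Hp. pose proof (HK s Hs) as Hk.
  assert (E : k s * k s = dot (wf a b gam 1 s) (wf a b gam 1 s)).
  { unfold kap. rewrite sqrt_sqrt; lra. }
  assert (E2 : dot (n s) (n s) = dot (wf a b gam 1 s) (wf a b gam 1 s) / (k s * k s)).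
  { unfold dot, nv. field. lra. }
  rewrite E2, <- E. field. lra.
Qed.

Lemma Tprime s i : U s -> (i < 3)%nat -> dvec tv s i + crs (ms s) (tv s) i = k s * n s i.
Proof. intros Hs Hi. rewrite <- w1_eq by auto. reflexivity. Qed.

Lemma exd_tv s i : U s -> (i < 3)%nat -> ex_derive (fun r => tv r i) s.
Proof. intros Hs Hi. apply (sm_ex _ U); auto. apply tv_smooth; auto. Qed.
Lemma exd_nv s i : U s -> (i < 3)%nat -> ex_derive (fun r => n r i) s.
Proof. intros Hs Hi. apply (sm_ex _ U); auto. apply nv_smooth; auto. Qed.

Lemma Hd_tv s i : U s -> (i < 3)%nat -> dvec tv s i = k s * n s i - crs (ms s) (tv s) i.
Proof. intros Hs Hi. rewrite <- Tprime by auto. ring. Qed.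

Lemma tn0 s : U s -> dot (tv s) (n s) = 0.
Proof.
  intros Hs.
  assert (D0 := Dloc_const U (fun r => dot (tv r) (tv r)) 1 HU Hunit s Hs).
  rewrite D_dot in D0 by (intros; apply exd_tv; auto).
  assert (E : dot (dvec tv s) (tv s) = k s * dot (tv s) (n s)).
  { unfold dot. rewrite !Hd_tv by (auto; lia). unfold crs, mk3. ring. }
  assert (E' : dot (tv s) (dvec tv s) = dot (dvec tv s) (tv s)) by (unfold dot; ring).
  pose proof (kap_pos s Hs).
  assert (k s * dot (tv s) (n s) = 0) by lra.
  apply Rmult_integral in H0. destruct H0; lra.
Qed.

Definition Np (s : R) : vec := fun i => dvec n s i + crs (ms s) (n s) i.

Lemma Np_eq s i : U s -> (i < 3)%nat -> Np s i = - k s * tv s i.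
Proof.
  intros Hs Hi.
  assert (Ht := Hunit s Hs). assert (Hn := nn1 s Hs). assert (Htn := tn0 s Hs).
  rewrite (decomp (tv s) (n s) (Np s) i Ht Hn Htn Hi).
  assert (E3 : dot (Np s) (crs (tv s) (n s)) = 0).
  { rewrite <- (Htor s Hs). unfold dot, Np, covF. reflexivity. }
  assert (E2 : dot (Np s) (n s) = 0).
  { assert (D0 := Dloc_const U (fun r => dot (n r) (n r)) 1 HU nn1 s Hs).
    rewrite D_dot in D0 by (intros; apply exd_nv; auto).
    assert (X : dot (Np s) (n s) = (dot (dvec n s) (n s) + dot (n s) (dvec n s)) / 2)
      by (unfold Np, dot, crs, mk3; field).
    rewrite X, D0. field. }
  assert (E1 : dot (Np s) (tv s) = - k s).
  { assert (D0 := Dloc_const U (fun r => dot (tv r) (n r)) 0 HU tn0 s Hs).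
    rewrite D_dot in D0; [| intros; apply exd_tv; auto | intros; apply exd_nv; auto].
    assert (Y : dot (dvec tv s) (n s) = k s * dot (n s) (n s) - dot (crs (ms s) (tv s)) (n s)).
    { unfold dot. rewrite !Hd_tv by (auto; lia). ring. }
    rewrite Y in D0.
    assert (X : dot (Np s) (tv s) + k s * dot (n s) (n s) =
                (k s * dot (n s) (n s) - dot (crs (ms s) (tv s)) (n s)) + dot (tv s) (dvec n s))
      by (unfold Np, dot, crs, mk3; ring).
    rewrite Hn in X, D0. lra. }
  rewrite E1, E2, E3. ring.
Qed.


Lemma step (X : R -> vec) (al be : R -> R) s : U s ->
  (forall r, U r -> forall i, (i < 3)%nat -> X r i = al r * tv r i + be r * n r i) ->
  ex_derive al s -> ex_derive be s ->
  forall i, (i < 3)%nat -> dvec X s i + crs (ms s) (X s) i =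
    (Derive al s - k s * be s) * tv s i + (Derive be s + k s * al s) * n s i.
Proof.
  intros Hs HX Ea Eb.
  assert (HD : forall i, (i < 3)%nat -> dvec X s i =
     Derive al s * tv s i + al s * dvec tv s i + (Derive be s * n s i + be s * dvec n s i)).
  { intros i Hi. unfold dvec at 1.
    rewrite (Derive_ext_loc (fun r => X r i) (fun r => al r * tv r i + be r * n r i)).
    - assert (Et : ex_derive (fun r => tv r i) s) by (apply exd_tv; assumption).
      assert (En : ex_derive (fun r => n r i) s) by (apply exd_nv; assumption).
      rewrite Derive_plus by (apply ex_derive_mult; assumption).
      rewrite !Derive_mult by assumption. reflexivity.
    - eapply filter_imp; [|exact (HU s Hs)]. intros r Hr. apply HX; auto. }
  assert (Hn' : forall i, (i < 3)%nat -> dvec n s i = - k s * tv s i - crs (ms s) (n s) i).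
  { intros i Hi. rewrite <- Np_eq by auto. unfold Np. ring. }
  intros i Hi. rewrite HD by assumption. rewrite Hd_tv, Hn' by assumption.
  destruct i as [|[|[|i]]]; try lia; unfold crs, mk3; rewrite !(HX s Hs) by lia; ring.
Qed.

Lemma Dk_smooth j : smooth (Derive_n k j) U.
Proof. induction j. exact kap_smooth. simpl. apply sm_D; auto. Qed.

Lemma isd j s : U s -> is_derive (Derive_n k j) s (Derive_n k (S j) s).
Proof. intros Hs. apply Derive_correct. apply (sm_ex _ U); auto. apply Dk_smooth. Qed.

Lemma exk j s : U s -> ex_derive (Derive_n k j) s.
Proof. intros Hs. apply (sm_ex _ U); auto. apply Dk_smooth. Qed.

Notation d1 := (Derive_n k 1).
Notation d2 := (Derive_n k 2).
Notation d3 := (Derive_n k 3).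
Notation d4 := (Derive_n k 4).

Lemma wf2 s i : U s -> (i < 3)%nat -> wf a b gam 2 s i = Al2 k s * tv s i + Be2 d1 s * n s i.
Proof.
  intros Hs Hi.
  change (wf a b gam 2 s i) with (dvec (wf a b gam 1) s i + crs (ms s) (wf a b gam 1 s) i).
  assert (HX : forall r, U r -> forall j, (j < 3)%nat -> wf a b gam 1 r j = (fun _ => 0) r * tv r j + k r * n r j).
  { intros r Hr j Hj. rewrite w1_eq by assumption. ring. }
  pose proof (step (wf a b gam 1) (fun _ => 0) k s Hs HX (@ex_derive_const R_AbsRing R_NormedModule 0 s) (exk 0 s Hs) i Hi) as St.
  cbv beta in St |- *. rewrite St.
  rewrite Derive_const. unfold Al2, Be2. simpl. eta_D. ring.
Qed.

Lemma exA2 s : U s -> ex_derive (Al2 k) s.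
Proof.
  intros Hs. unfold Al2. auto_derive. exact (exk 0 s Hs).
Qed.

Lemma wf3 s i : U s -> (i < 3)%nat -> wf a b gam 3 s i = Al3 k d1 s * tv s i + Be3 k d2 s * n s i.
Proof.
  intros Hs Hi.
  change (wf a b gam 3 s i) with (dvec (wf a b gam 2) s i + crs (ms s) (wf a b gam 2 s) i).
  pose proof (step (wf a b gam 2) (Al2 k) (Be2 d1) s Hs (fun r Hr j Hj => wf2 r j Hr Hj) (exA2 s Hs) (exk 1 s Hs) i Hi) as St.
  cbv beta in St |- *. rewrite St.
  rewrite (dA2 k d1 d2 d3 d4 s (isd 0 s Hs) (isd 1 s Hs) (isd 2 s Hs) (isd 3 s Hs)), (dB2 k d1 d2 d3 d4 s (isd 0 s Hs) (isd 1 s Hs) (isd 2 s Hs) (isd 3 s Hs)). unfold Al2, Be2, Al3, Be3. ring.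
Qed.


Lemma wf4 s i : U s -> (i < 3)%nat -> wf a b gam 4 s i = Al4 k d1 d2 s * tv s i + Be4 k d1 d3 s * n s i.
Proof.
  intros Hs Hi.
  change (wf a b gam 4 s i) with (dvec (wf a b gam 3) s i + crs (ms s) (wf a b gam 3 s) i).
  pose proof (step (wf a b gam 3) (Al3 k d1) (Be3 k d2) s Hs (fun r Hr j Hj => wf3 r j Hr Hj)
     (eA3 k d1 d2 d3 d4 s (isd 0 s Hs) (isd 1 s Hs) (isd 2 s Hs) (isd 3 s Hs))
     (eB3 k d1 d2 d3 d4 s (isd 0 s Hs) (isd 1 s Hs) (isd 2 s Hs) (isd 3 s Hs)) i Hi) as St.
  cbv beta in St |- *. rewrite St.
  rewrite (dA3 k d1 d2 d3 d4 s (isd 0 s Hs) (isd 1 s Hs) (isd 2 s Hs) (isd 3 s Hs)), (dB3 k d1 d2 d3 d4 s (isd 0 s Hs) (isd 1 s Hs) (isd 2 s Hs) (isd 3 s Hs)).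
  unfold Al3, Be3, Al4, Be4. ring.
Qed.

Lemma wf5 s i : U s -> (i < 3)%nat -> wf a b gam 5 s i = Al5 k d1 d2 d3 s * tv s i + Be5 k d1 d2 d4 s * n s i.
Proof.
  intros Hs Hi.
  change (wf a b gam 5 s i) with (dvec (wf a b gam 4) s i + crs (ms s) (wf a b gam 4 s) i).
  pose proof (step (wf a b gam 4) (Al4 k d1 d2) (Be4 k d1 d3) s Hs (fun r Hr j Hj => wf4 r j Hr Hj)
     (eA4 k d1 d2 d3 d4 s (isd 0 s Hs) (isd 1 s Hs) (isd 2 s Hs) (isd 3 s Hs))
     (eB4 k d1 d2 d3 d4 s (isd 0 s Hs) (isd 1 s Hs) (isd 2 s Hs) (isd 3 s Hs)) i Hi) as St.
  cbv beta in St |- *. rewrite St.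
  rewrite (dA4 k d1 d2 d3 d4 s (isd 0 s Hs) (isd 1 s Hs) (isd 2 s Hs) (isd 3 s Hs)),
          (dB4 k d1 d2 d3 d4 s (isd 0 s Hs) (isd 1 s Hs) (isd 2 s Hs) (isd 3 s Hs)).
  unfold Al4, Be4, Al5, Be5. ring.
Qed.

Lemma scalar_eqs s : U s ->
  (forall i, (i < 3)%nat -> wf a b gam 5 s i + Rf a b (wf a b gam 3 s) (tv s) (tv s) i
                          - Rf a b (wf a b gam 2 s) (wf a b gam 1 s) (tv s) i = 0) ->
  Al5 k d1 d2 d3 s = 0 /\
  Be5 k d1 d2 d4 s + (Be3 k d2 s - k s ^ 3) * (b^2/4 + (4*a - b^2) * Bz a b gam s ^ 2) = 0 /\
  (Be3 k d2 s - k s ^ 3) * ((4*a - b^2) * n s 2%nat * Bz a b gam s) = 0.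
Proof.
  intros Hs HT.
  assert (Htt := Hunit s Hs). assert (Hnn := nn1 s Hs). assert (Htn := tn0 s Hs).
  pose (t := tv s). pose (m := n s). pose (be := crs t m).
  assert (Hbb : dot be be = 1) by (apply crs_unit; auto).
  destruct (crs_perp t m) as [Htb Hnb]. fold be in Htb, Hnb.
  set (c := Be3 k d2 s - k s ^ 3).
  set (P := b^2/4 + (4*a - b^2) * Bz a b gam s ^ 2).
  set (Q := - (4*a - b^2) * m 2%nat * Bz a b gam s).
  assert (HV : forall i, (i < 3)%nat ->
     Al5 k d1 d2 d3 s * t i + (Be5 k d1 d2 d4 s + c * P) * m i + c * Q * be i = 0).
  { intros i Hi. rewrite <- (HT i Hi).
    rewrite (wf5 s i Hs Hi).
    rewrite (Rf_lin a b (wf a b gam 3 s) (tv s) (tv s) (fun j => Al3 k d1 s * t j + Be3 k d2 s * m j) t t i Hi)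
      by (intros j Hj; first [apply wf3; assumption | reflexivity]).
    rewrite (Rf_lin a b (wf a b gam 2 s) (wf a b gam 1 s) (tv s) (fun j => Al2 k s * t j + Be2 d1 s * m j) (fun j => k s * m j) t i Hi)
      by (intros j Hj; first [apply wf2; assumption | apply w1_eq; assumption | reflexivity]).
    assert (L1 : Rf a b (fun j => Al3 k d1 s * t j + Be3 k d2 s * m j) t t i = Be3 k d2 s * Rf a b m t t i).
    { unfold Rf; unfold dot, hz, mk3. destruct i as [|[|[|i]]]; try lia; field. }
    assert (L2 : Rf a b (fun j => Al2 k s * t j + Be2 d1 s * m j) (fun j => k s * m j) t i = - (Al2 k s * k s) * Rf a b m t t i).
    { unfold Rf; unfold dot, hz, mk3. destruct i as [|[|[|i]]]; try lia; field. }
    rewrite L1, L2. rewrite (Rf_nt a b t m i Htt Hnn Htn Hi).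
    unfold c, P, Q, be, Bz, Al2. fold t m. field. }
  assert (E1 : dot (fun i => Al5 k d1 d2 d3 s * t i + (Be5 k d1 d2 d4 s + c * P) * m i + c * Q * be i) t
               = Al5 k d1 d2 d3 s * dot t t + (Be5 k d1 d2 d4 s + c * P) * dot t m + c * Q * dot t be)
    by (unfold dot; ring).
  assert (E2 : dot (fun i => Al5 k d1 d2 d3 s * t i + (Be5 k d1 d2 d4 s + c * P) * m i + c * Q * be i) m
               = Al5 k d1 d2 d3 s * dot t m + (Be5 k d1 d2 d4 s + c * P) * dot m m + c * Q * dot m be)
    by (unfold dot; ring).
  assert (E3 : dot (fun i => Al5 k d1 d2 d3 s * t i + (Be5 k d1 d2 d4 s + c * P) * m i + c * Q * be i) be
               = Al5 k d1 d2 d3 s * dot t be + (Be5 k d1 d2 d4 s + c * P) * dot m be + c * Q * dot be be)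
    by (unfold dot; ring).
  assert (Z : forall z, dot (fun i => Al5 k d1 d2 d3 s * t i + (Be5 k d1 d2 d4 s + c * P) * m i + c * Q * be i) z = 0).
  { intros z. unfold dot. rewrite !HV by lia. ring. }
  rewrite Z in E1, E2, E3. fold t m in Htt, Hnn, Htn. rewrite Htt, Htn, Htb in E1.
  rewrite Htn, Hnn, Hnb in E2. rewrite Htb, Hnb, Hbb in E3.
  split; [lra|split; [lra|]].
  unfold Q in E3. fold m. lra.
Qed.

Lemma Hn'_eq s i : U s -> (i < 3)%nat -> dvec n s i = - k s * tv s i - crs (ms s) (n s) i.
Proof. intros Hs Hi. rewrite <- Np_eq by assumption. unfold Np. ring. Qed.

Lemma Bz_smooth : smooth (Bz a b gam) U.
Proof.
  assert (T0 := tv_smooth 0 ltac:(lia)). assert (T1 := tv_smooth 1 ltac:(lia)).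
  assert (N0 := nv_smooth 0 ltac:(lia)). assert (N1 := nv_smooth 1 ltac:(lia)).
  apply (sm_ext U (fun s => tv s 0%nat * n s 1%nat - tv s 1%nat * n s 0%nat)); [assumption| |].
  smt. intros s Hs. reflexivity.
Qed.

Lemma dBz s : U s -> Derive (Bz a b gam) s = b / 2 * n s 2%nat.
Proof.
  intros Hs.
  assert (Htt := Hunit s Hs). assert (Htn := tn0 s Hs).
  pose (t0 := fun r => tv r 0%nat). pose (t1 := fun r => tv r 1%nat).
  pose (n0 := fun r => n r 0%nat). pose (n1 := fun r => n r 1%nat).
  assert (E0 : ex_derive t0 s) by (apply exd_tv; [assumption|lia]).
  assert (E1 : ex_derive t1 s) by (apply exd_tv; [assumption|lia]).
  assert (E2 : ex_derive n0 s) by (apply exd_nv; [assumption|lia]).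
  assert (E3 : ex_derive n1 s) by (apply exd_nv; [assumption|lia]).
  assert (D : Derive (Bz a b gam) s = Derive t0 s * n1 s + t0 s * Derive n1 s - (Derive t1 s * n0 s + t1 s * Derive n0 s)).
  { change (Bz a b gam) with (fun r => t0 r * n1 r - t1 r * n0 r).
    apply is_derive_unique. auto_derive; [repeat split; assumption|]. eta_D. field. }
  rewrite D.
  change (Derive t0 s) with (dvec tv s 0%nat). change (Derive t1 s) with (dvec tv s 1%nat).
  change (Derive n0 s) with (dvec n s 0%nat). change (Derive n1 s) with (dvec n s 1%nat).
  rewrite !Hd_tv, !Hn'_eq by (first [assumption | lia]).
  unfold t0, t1, n0, n1.
  assert (X : forall (t m : vec) kk (mm : vec), mm 0%nat = b/2 * t 0%nat -> mm 1%nat = b/2 * t 1%nat ->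
     (kk * m 0%nat - crs mm t 0%nat) * m 1%nat + t 0%nat * (- kk * t 1%nat - crs mm m 1%nat)
     - ((kk * m 1%nat - crs mm t 1%nat) * m 0%nat + t 1%nat * (- kk * t 0%nat - crs mm m 0%nat))
     = b / 2 * (m 2%nat * dot t t - t 2%nat * dot t m)).
  { intros t m kk mm H0 H1. unfold crs, dot, mk3. rewrite H0, H1. field. }
  rewrite X by reflexivity. rewrite Htt, Htn. ring.
Qed.

Lemma dn2 s : U s -> Derive (fun r => n r 2%nat) s = - k s * tv s 2%nat - b / 2 * Bz a b gam s.
Proof.
  intros Hs. change (Derive (fun r => n r 2%nat) s) with (dvec n s 2%nat).
  rewrite Hn'_eq by (first [assumption|lia]). unfold Bz, crs, mu, mk3. field.
Qed.

Lemma unit3 s : U s -> tv s 2%nat ^ 2 + n s 2%nat ^ 2 + Bz a b gam s ^ 2 = 1.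
Proof.
  intros Hs. assert (Htt := Hunit s Hs). assert (Hnn := nn1 s Hs). assert (Htn := tn0 s Hs).
  assert (E : forall t m : vec, t 2%nat ^ 2 + m 2%nat ^ 2 + crs t m 2%nat ^ 2 =
     t 2%nat ^ 2 + m 2%nat ^ 2 + (dot t t - t 2%nat ^ 2) * (dot m m - m 2%nat ^ 2) - (dot t m - t 2%nat * m 2%nat) ^ 2).
  { intros t m. unfold dot, crs, mk3. ring. }
  unfold Bz. rewrite E, Htt, Hnn, Htn. ring.
Qed.
End Frenet.

Lemma inI_between lo hi x y z : inI lo hi x -> inI lo hi z -> x <= y <= z -> inI lo hi y.
Proof.
  intros [H1 H2] [H3 H4] [H5 H6]. split.
  - destruct lo as [l| |]; simpl in *; auto; lra.
  - destruct hi as [h| |]; simpl in *; auto; lra.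
Qed.

Lemma const_on lo hi g : (forall r, inI lo hi r -> is_derive g r 0) ->
  forall r1 r2, inI lo hi r1 -> inI lo hi r2 -> g r1 = g r2.
Proof.
  intros Hd r1 r2 H1 H2.
  destruct (MVT_gen g r1 r2 (fun _ => 0)) as [c [Hc E]].
  - intros x Hx. apply Hd.
    destruct (Rle_dec r1 r2).
    + rewrite Rmin_left, Rmax_right in Hx by lra. apply (inI_between lo hi r1 x r2); auto; lra.
    + rewrite Rmin_right, Rmax_left in Hx by lra. apply (inI_between lo hi r2 x r1); auto; lra.
  - intros x Hx. apply continuity_pt_filterlim.
    apply (@ex_derive_continuous R_AbsRing R_NormedModule). exists 0. apply Hd.
    destruct (Rle_dec r1 r2).
    + rewrite Rmin_left, Rmax_right in Hx by lra. apply (inI_between lo hi r1 x r2); auto; lra.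
    + rewrite Rmin_right, Rmax_left in Hx by lra. apply (inI_between lo hi r2 x r1); auto; lra.
  - lra.
Qed.

Lemma deriv_zero_of_zero (U : R -> Prop) (g : R -> R) (r l : R) : opn U -> (forall x, U x -> g x = 0) -> U r -> is_derive g r l -> l = 0.
Proof.
  intros HU Hz Hr Hd. rewrite <- (is_derive_unique _ _ _ Hd).
  apply (Dloc_const U g 0 HU Hz r Hr).
Qed.

Lemma isd_cont (f : R -> R) (r l : R) : is_derive f r l -> continuous f r.
Proof. intros H. apply (@ex_derive_continuous R_AbsRing R_NormedModule). exists l; exact H. Qed.

Lemma loc_nz (U : R -> Prop) (f : R -> R) (r l : R) : opn U -> U r -> is_derive f r l -> f r <> 0 ->
  locally r (fun x => U x /\ f x <> 0).
Proof.
  intros HU Hr Hd Hn. apply filter_and. apply HU; auto.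
  apply (cont_locally_nz f r); auto. apply (isd_cont f r l Hd).
Qed.

Lemma loc_open (P : R -> Prop) r : locally r P -> exists V, opn V /\ V r /\ forall x, V x -> P x.
Proof.
  intros H. exists (fun x => locally x P). split; [|split].
  - intros x Hx. apply locally_locally. exact Hx.
  - exact H.
  - intros x Hx. apply (locally_singleton _ _ Hx).
Qed.

Definition Fpol (A C k u : R) : R :=
  -7 * u^2 + (16*C - 14*k^4 - A*k^2) * u - 7*k^8 - 3*A*k^6 - 20*C*k^4 + 2*A*C*k^2 - 4*C^2.
Definition Fk (A C k u : R) : R :=
  (-56*k^3 - 2*A*k) * u - 56*k^7 - 18*A*k^5 - 80*C*k^3 + 4*A*C*k.
Definition Fu (A C k u : R) : R := -14*u + 16*C - 14*k^4 - A*k^2.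
Definition Dn (A C k : R) : R := 3 * (28*k^4 + A*k^2 + 4*C).
Definition Nn (A C k : R) : R := -84*k^8 - 25*A*k^6 - 132*C*k^4 + 6*A*C*k^2 + 24*C^2.
Definition q5 (A C K : R) : R :=
  36288*C^3 + 14112*A*C^2*K + (-362880*C^2 + 1452*A^2*C)*K^2 + (-64512*A*C + 48*A^3)*K^3
  + (-254016*C - 2548*A^2)*K^4 - 14112*A*K^5.

Lemma alg_F k p q r3 r4 A C : k <> 0 ->
  -10*p*q - 5*k*r3 + 10*k^3*p = 0 ->
  -10*(q^2 + p*r3) - 5*(p*r3 + k*r4) + 30*k^2*p^2 + 10*k^3*q = 0 ->
  r4 - 15*k*p^2 - 10*k^2*q + k^5 + (q - 2*k^3)*A = 0 ->
  k*q + p^2/2 - k^4/2 = C ->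
  Fpol A C k (p^2) = 0.
Proof.
  intros Hk T T' N Ce.
  assert (Hr3 : r3 = (10*k^3*p - 10*p*q)/(5*k)) by (field_simplify_eq; auto; lra).
  assert (Hr4 : r4 = (-10*(q^2 + p*r3) - 5*p*r3 + 30*k^2*p^2 + 10*k^3*q)/(5*k)) by (field_simplify_eq; auto; lra).
  assert (Hq : q = (C - p^2/2 + k^4/2)/k) by (field_simplify_eq; auto; lra).
  rewrite Hr4 in N. rewrite Hr3 in N. rewrite Hq in N.
  match type of N with ?L = 0 => transitivity (2*k^3*L); [unfold Fpol; field; auto | rewrite N; ring] end.
Qed.

Lemma alg_Q A C k u : k <> 0 -> Fpol A C k u = 0 -> Dn A C k * u = Nn A C k -> q5 A C (k^2) = 0.
Proof.
  intros Hk HF HG.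
  assert (E : k^4 * q5 A C (k^2) = Dn A C k ^ 2 * Fpol A C k u
     + (Nn A C k - Dn A C k * u) * (-7 * (Nn A C k + Dn A C k * u) + (16*C - 14*k^4 - A*k^2) * Dn A C k)).
  { unfold q5, Dn, Nn, Fpol. ring. }
  rewrite HF, HG in E. replace (Nn A C k - Nn A C k) with 0 in E by ring.
  assert (k^4 <> 0) by (apply pow_nonzero; auto).
  apply (Rmult_eq_reg_l (k^4)); auto. rewrite E. ring.
Qed.

Lemma alg_G A C k u : k <> 0 -> Fpol A C k u = 0 ->
  k * Fk A C k u + Fu A C k u * (2*C + k^4 - u) = 0 -> Dn A C k * u = Nn A C k.
Proof.
  intros Hk HF HH.
  assert (E : k * Fk A C k u + Fu A C k u * (2*C + k^4 - u) + 2 * Fpol A C k u = - Dn A C k * u + Nn A C k).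
  { unfold Fk, Fu, Fpol, Dn, Nn. ring. }
  rewrite HF, HH in E. lra.
Qed.

Lemma poly_step (V : R -> Prop) (g dg P dP : R -> R) : opn V ->
  (forall x, V x -> is_derive g x (dg x) /\ dg x <> 0) ->
  (forall y, is_derive P y (dP y)) ->
  (forall x, V x -> P (g x) = 0) -> forall x, V x -> dP (g x) = 0.
Proof.
  intros HV Hg HP Hz x Hx.
  destruct (Hg x Hx) as [Hd Hn].
  assert (Hc : is_derive (fun y => P (g y)) x (dg x * dP (g x))).
  { apply (is_derive_comp P g x (dP (g x)) (dg x)); auto. }
  pose proof (deriv_zero_of_zero V (fun y => P (g y)) x _ HV Hz Hx Hc) as Z.
  apply Rmult_integral in Z. destruct Z; [contradiction|auto].
Qed.


Definition cq0 (A C : R) := 36288*C^3.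
Definition cq1 (A C : R) := 14112*A*C^2.
Definition cq2 (A C : R) := -362880*C^2 + 1452*A^2*C.
Definition cq3 (A C : R) := -64512*A*C + 48*A^3.
Definition cq4 (A C : R) := -254016*C - 2548*A^2.
Definition cq5 (A C : R) := -14112*A.
Definition P1 A C K := cq1 A C + 2*cq2 A C*K + 3*cq3 A C*K^2 + 4*cq4 A C*K^3 + 5*cq5 A C*K^4.
Definition P2 A C K := 2*cq2 A C + 6*cq3 A C*K + 12*cq4 A C*K^2 + 20*cq5 A C*K^3.
Definition P3 A C K := 6*cq3 A C + 24*cq4 A C*K + 60*cq5 A C*K^2.
Definition P4 A C K := 24*cq4 A C + 120*cq5 A C*K.
Definition P5 (A C K : R) := 120*cq5 A C.

Lemma q5_P A C K : q5 A C K = cq0 A C + cq1 A C*K + cq2 A C*K^2 + cq3 A C*K^3 + cq4 A C*K^4 + cq5 A C*K^5.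
Proof. unfold q5, cq0, cq1, cq2, cq3, cq4, cq5. ring. Qed.

Lemma dq5 A C y : is_derive (q5 A C) y (P1 A C y).
Proof.
  apply (is_derive_ext (fun K => cq0 A C + cq1 A C*K + cq2 A C*K^2 + cq3 A C*K^3 + cq4 A C*K^4 + cq5 A C*K^5)).
  intros; rewrite q5_P; reflexivity.
  unfold P1. auto_derive; auto. ring.
Qed.
Lemma dP1 A C y : is_derive (P1 A C) y (P2 A C y). Proof. unfold P1, P2. auto_derive; auto. ring. Qed.
Lemma dP2 A C y : is_derive (P2 A C) y (P3 A C y). Proof. unfold P2, P3. auto_derive; auto. ring. Qed.
Lemma dP3 A C y : is_derive (P3 A C) y (P4 A C y). Proof. unfold P3, P4. auto_derive; auto. ring. Qed.
Lemma dP4 A C y : is_derive (P4 A C) y (P5 A C y). Proof. unfold P4, P5. auto_derive; auto. ring. Qed.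

Section ODE.
Variables (a b : R) (lo hi : Rbar) (f0 f1 f2 f3 f4 Bf nf tz : R -> R) (s0 : R).
Notation U := (inI lo hi).
Hypothesis Hs0 : U s0.
Hypothesis Hd0 : forall r, U r -> is_derive f0 r (f1 r).
Hypothesis Hd1 : forall r, U r -> is_derive f1 r (f2 r).
Hypothesis Hd2 : forall r, U r -> is_derive f2 r (f3 r).
Hypothesis Hd3 : forall r, U r -> is_derive f3 r (f4 r).
Hypothesis HBd : forall r, U r -> is_derive Bf r (b / 2 * nf r).
Hypothesis Hnd : forall r, U r -> is_derive nf r (- f0 r * tz r - b / 2 * Bf r).
Hypothesis Hpos : forall r, U r -> 0 < f0 r.
Hypothesis HT : forall r, U r -> Al5 f0 f1 f2 f3 r = 0.
Hypothesis HN : forall r, U r ->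
  Be5 f0 f1 f2 f4 r + (Be3 f0 f2 r - f0 r ^ 3) * (b^2/4 + (4*a - b^2) * Bf r ^ 2) = 0.
Hypothesis HBq : forall r, U r -> (Be3 f0 f2 r - f0 r ^ 3) * ((4*a - b^2) * nf r * Bf r) = 0.
Hypothesis Hu3 : forall r, U r -> tz r ^ 2 + nf r ^ 2 + Bf r ^ 2 = 1.
Hypothesis HD : 4 * a <> b ^ 2.

Let HU : opn U := opn_inI lo hi.

Lemma nB0 r : U r -> nf r * Bf r = 0.
Proof.
  intros Hr. destruct (Req_dec (nf r * Bf r) 0) as [|Hne]; auto. exfalso.
  assert (Hloc : locally r (fun x => U x /\ nf x * Bf x <> 0)).
  { apply filter_and. apply HU; auto.
    apply (cont_locally_nz (fun x => nf x * Bf x) r); auto.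
    apply (@ex_derive_continuous R_AbsRing R_NormedModule).
    apply ex_derive_mult. exists (- f0 r * tz r - b / 2 * Bf r); auto. exists (b / 2 * nf r); auto. }
  destruct (loc_open _ r Hloc) as [V [HV [Vr HVP]]].
  assert (H2 : forall x, V x -> f2 x = 2 * f0 x ^ 3).
  { intros x Hx. destruct (HVP x Hx) as [Ux Nx]. pose proof (HBq x Ux) as Q.
    apply Rmult_integral in Q. destruct Q as [Q|Q].
    - unfold Be3 in Q. lra.
    - exfalso. assert (4*a - b^2 <> 0) by lra.
      assert ((4*a - b^2) * (nf x * Bf x) <> 0) by (apply Rmult_integral_contrapositive_currified; auto).
      apply H0. rewrite <- Q. ring. }
  assert (H3 : forall x, V x -> f3 x = 6 * f0 x ^ 2 * f1 x).
  { intros x Hx. destruct (HVP x Hx) as [Ux Nx].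
    rewrite <- (is_derive_unique _ _ _ (Hd2 x Ux)).
    rewrite (Derive_ext_loc f2 (fun y => 2 * f0 y ^ 3)).
    - apply is_derive_unique. pose proof (Hd0 x Ux). auto_derive.
      exists (f1 x); auto. eta_D. rewrite (is_derive_unique _ _ _ H). ring.
    - eapply filter_imp; [|exact (HV x Hx)]. apply H2. }
  assert (H1 : forall x, V x -> f1 x = 0).
  { intros x Hx. destruct (HVP x Hx) as [Ux Nx]. pose proof (HT x Ux) as T. unfold Al5 in T.
    rewrite H2, H3 in T by auto. pose proof (Hpos x Ux) as Px.
    assert (W : -40 * f0 x ^ 3 * f1 x = 0) by (rewrite <- T; ring).
    assert (W3 : f0 x ^ 3 <> 0) by (apply pow_nonzero; lra).
    apply Rmult_integral in W. destruct W as [W|W]; auto.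
    apply Rmult_integral in W. destruct W; [lra|contradiction]. }
  destruct (HVP r Vr) as [Ur _].
  pose proof (deriv_zero_of_zero V f1 r (f2 r) HV H1 Vr (Hd1 r Ur)) as Z.
  rewrite H2 in Z by auto. pose proof (Hpos r Ur) as Pr.
  assert (W3 : f0 r ^ 3 <> 0) by (apply pow_nonzero; lra). lra.
Qed.


Lemma Bconst r : U r -> Bf r = Bf s0.
Proof.
  intros Hr.
  assert (Hsq : forall x, U x -> is_derive (fun y => Bf y ^ 2) x 0).
  { intros x Ux. pose proof (HBd x Ux) as Hb. pose proof (nB0 x Ux) as Z.
    auto_derive. exists (b / 2 * nf x); auto. eta_D. rewrite (is_derive_unique _ _ _ Hb).
    transitivity (b * (nf x * Bf x)); [field | rewrite Z; field]. }
  pose proof (const_on lo hi _ Hsq r s0 Hr Hs0) as E. simpl in E.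
  destruct (Req_dec (Bf s0) 0) as [Z|Z].
  - rewrite Z in E. assert (Bf r * Bf r = 0) by (transitivity (Bf r * (Bf r * 1)); [ring | rewrite E; ring]).
    apply Rmult_integral in H. destruct H; lra.
  - assert (Hd : forall x, U x -> is_derive Bf x 0).
    { intros x Ux. pose proof (const_on lo hi _ Hsq x s0 Ux Hs0) as Ex. simpl in Ex.
      assert (Bf x <> 0).
      { intro Hx. rewrite Hx in Ex. apply Z. assert (Bf s0 * Bf s0 = 0) by (transitivity (Bf s0 * (Bf s0 * 1)); [ring | rewrite <- Ex; ring]).
        apply Rmult_integral in H. destruct H; auto. }
      pose proof (nB0 x Ux) as N0. apply Rmult_integral in N0. destruct N0 as [N0|N0]; [|contradiction].
      replace 0 with (b / 2 * nf x) by (rewrite N0; ring). auto. }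
    apply (const_on lo hi Bf Hd r s0 Hr Hs0).
Qed.

Let c := Bf s0.
Let Am := b^2/4 + (4*a - b^2) * c^2.
Let Cf := fun x => f0 x * f2 x + f1 x ^ 2 / 2 - f0 x ^ 4 / 2.
Let C := Cf s0.

Lemma Cconst x : U x -> Cf x = C.
Proof.
  intros Ux. unfold C. apply (const_on lo hi Cf); auto.
  intros y Uy. pose proof (Hd0 y Uy). pose proof (Hd1 y Uy). pose proof (Hd2 y Uy). pose proof (HT y Uy) as T.
  unfold Cf. auto_derive. repeat split; try (eexists; eassumption).
  eta_D. rewrite (is_derive_unique _ _ _ H), (is_derive_unique _ _ _ H0), (is_derive_unique _ _ _ H1).
  unfold Al5 in T. transitivity (- (-10 * f1 y * f2 y - 5 * f0 y * f3 y + 10 * f0 y ^ 3 * f1 y) / 5);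
  [field | rewrite T; field].
Qed.

Lemma Tp x : U x -> -10*(f2 x^2 + f1 x*f3 x) - 5*(f1 x*f3 x + f0 x*f4 x) + 30*f0 x^2*f1 x^2 + 10*f0 x^3*f2 x = 0.
Proof.
  intros Ux. apply (deriv_zero_of_zero U (Al5 f0 f1 f2 f3) x); auto.
  pose proof (Hd0 x Ux). pose proof (Hd1 x Ux). pose proof (Hd2 x Ux). pose proof (Hd3 x Ux).
  unfold Al5. auto_derive. repeat split; try (eexists; eassumption).
  eta_D. rewrite (is_derive_unique _ _ _ H), (is_derive_unique _ _ _ H0), (is_derive_unique _ _ _ H1), (is_derive_unique _ _ _ H2).
  field.
Qed.

Lemma Fzero x : U x -> Fpol Am C (f0 x) (f1 x ^ 2) = 0.
Proof.
  intros Ux. pose proof (Hpos x Ux).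
  apply (alg_F (f0 x) (f1 x) (f2 x) (f3 x) (f4 x)); [lra | | apply Tp; auto | |].
  - pose proof (HT x Ux) as T. unfold Al5 in T. lra.
  - pose proof (HN x Ux) as N. rewrite (Bconst x Ux) in N. fold c in N. unfold Be5, Be3 in N. unfold Am.
    rewrite <- N. ring.
  - pose proof (Cconst x Ux) as E. unfold Cf in E. lra.
Qed.

Lemma f1_zero x : U x -> f1 x = 0.
Proof.
  intros Ux. destruct (Req_dec (f1 x) 0) as [|Hne]; auto. exfalso.
  assert (Hloc : locally x (fun y => U y /\ f1 y <> 0)) by (apply (loc_nz U f1 x (f2 x)); auto).
  destruct (loc_open _ x Hloc) as [V [HV [Vx HVP]]].
  assert (HG : forall y, V y -> Dn Am C (f0 y) * f1 y ^ 2 = Nn Am C (f0 y)).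
  { intros y Vy. destruct (HVP y Vy) as [Uy Ny]. pose proof (Hpos y Uy) as Py.
    assert (Hder : is_derive (fun z => Fpol Am C (f0 z) (f1 z ^ 2)) y
       (Fk Am C (f0 y) (f1 y ^ 2) * f1 y + Fu Am C (f0 y) (f1 y ^ 2) * (2 * f1 y * f2 y))).
    { pose proof (Hd0 y Uy). pose proof (Hd1 y Uy).
      unfold Fpol. auto_derive. repeat split; try (eexists; eassumption).
      eta_D. rewrite (is_derive_unique _ _ _ H), (is_derive_unique _ _ _ H0). unfold Fk, Fu. field. }
    pose proof (deriv_zero_of_zero U _ y _ HU Fzero Uy Hder) as Z.
    assert (Z2 : f1 y * (Fk Am C (f0 y) (f1 y ^ 2) + 2 * f2 y * Fu Am C (f0 y) (f1 y ^ 2)) = 0)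
      by (rewrite <- Z; ring).
    apply Rmult_integral in Z2. destruct Z2 as [Z2|Z2]; [contradiction|].
    apply alg_G; [lra | apply Fzero; auto |].
    pose proof (Cconst y Uy) as E. unfold Cf in E.
    replace (2 * C + f0 y ^ 4 - f1 y ^ 2) with (2 * f0 y * f2 y) by (rewrite <- E; field).
    transitivity (f0 y * (Fk Am C (f0 y) (f1 y ^ 2) + 2 * f2 y * Fu Am C (f0 y) (f1 y ^ 2))); [ring|].
    rewrite Z2. ring. }
  assert (Hq : forall y, V y -> q5 Am C (f0 y ^ 2) = 0).
  { intros y Vy. destruct (HVP y Vy) as [Uy Ny]. pose proof (Hpos y Uy).
    apply (alg_Q Am C (f0 y) (f1 y ^ 2)); [lra | apply Fzero; auto | apply HG; auto]. }
  assert (Hg : forall y, V y -> is_derive (fun z => f0 z ^ 2) y (2 * f0 y * f1 y) /\ 2 * f0 y * f1 y <> 0).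
  { intros y Vy. destruct (HVP y Vy) as [Uy Ny]. pose proof (Hpos y Uy). split.
    - pose proof (Hd0 y Uy). auto_derive. exists (f1 y); auto. eta_D. rewrite (is_derive_unique _ _ _ H0). ring.
    - apply Rmult_integral_contrapositive_currified; auto. lra. }
  pose proof (poly_step V _ _ _ _ HV Hg (dq5 Am C) Hq) as S1.
  pose proof (poly_step V _ _ _ _ HV Hg (dP1 Am C) S1) as S2.
  pose proof (poly_step V _ _ _ _ HV Hg (dP2 Am C) S2) as S3.
  pose proof (poly_step V _ _ _ _ HV Hg (dP3 Am C) S3) as S4.
  pose proof (poly_step V _ _ _ _ HV Hg (dP4 Am C) S4) as S5.
  assert (HA : Am = 0) by (pose proof (S5 x Vx) as W; unfold P5, cq5 in W; lra).
  assert (HC : C = 0) by (pose proof (S4 x Vx) as W; unfold P4, cq4, cq5 in W; rewrite HA in W; lra).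
  pose proof (HG x Vx) as W. rewrite HA, HC in W. unfold Dn, Nn in W.
  destruct (HVP x Vx) as [Ux' _]. pose proof (Hpos x Ux') as P.
  assert (P4 : 0 < f0 x ^ 4) by (apply pow_lt; lra).
  assert (0 <= f1 x ^ 2) by (apply pow2_ge_0).
  assert (E : 84 * f0 x ^ 4 * (f1 x ^ 2 + f0 x ^ 4) = 0) by (rewrite <- (Rminus_diag_eq _ _ W); ring).
  apply Rmult_integral in E. destruct E as [E|E]; [|nra].
  apply Rmult_integral in E. destruct E as [E|E]; lra.
Qed.

Lemma ode_main : exists k0 c0, 0 < k0 /\ (forall r, U r -> f0 r = k0 /\ Bf r = c0) /\
  k0 ^ 2 = 2 * (b ^ 2 / 4 + (4 * a - b ^ 2) * c0 ^ 2) /\ c0 <> 0.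
Proof.
  assert (Z1 : forall r, U r -> f1 r = 0) by (intros; apply f1_zero; auto).
  assert (Z2 : forall r, U r -> f2 r = 0).
  { intros r Ur. apply (deriv_zero_of_zero U f1 r); auto. }
  assert (Z3 : forall r, U r -> f3 r = 0).
  { intros r Ur. apply (deriv_zero_of_zero U f2 r); auto. }
  assert (Z4 : forall r, U r -> f4 r = 0).
  { intros r Ur. apply (deriv_zero_of_zero U f3 r); auto. }
  assert (K0 : forall r, U r -> f0 r = f0 s0).
  { intros r Ur. apply (const_on lo hi f0); auto. intros y Uy. rewrite <- (Z1 y Uy). auto. }
  pose proof (Hpos s0 Hs0) as P0.
  assert (Hk : f0 s0 ^ 2 = 2 * Am).
  { pose proof (HN s0 Hs0) as N. unfold Be5, Be3 in N. rewrite Z1, Z2, Z4 in N by auto. fold c Am in N.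
    assert (E : f0 s0 ^ 3 * (f0 s0 ^ 2 - 2 * Am) = 0) by (rewrite <- N; ring).
    apply Rmult_integral in E. destruct E as [E|E]; [|lra].
    exfalso. assert (f0 s0 ^ 3 <> 0) by (apply pow_nonzero; lra). contradiction. }
  exists (f0 s0), c. split; [auto|split; [|split]].
  - intros r Ur. split; [apply K0; auto | apply Bconst; auto].
  - rewrite Hk. unfold Am. ring.
  - intros Hc.
    assert (B0 : forall r, U r -> Bf r = 0) by (intros r Ur; rewrite Bconst by auto; exact Hc).
    assert (Nb : forall r, U r -> b / 2 * nf r = 0).
    { intros r Ur. apply (deriv_zero_of_zero U Bf r); auto. }
    destruct (Req_dec b 0) as [Hb|Hb].
    + unfold Am in Hk. rewrite Hc, Hb in Hk. assert (0 < f0 s0 ^ 2) by (apply pow_lt; lra). lra.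
    + assert (N0 : forall r, U r -> nf r = 0).
      { intros r Ur. pose proof (Nb r Ur) as W. apply Rmult_integral in W. destruct W as [W|W]; auto.
        exfalso. apply Hb. lra. }
      assert (T0 : - f0 s0 * tz s0 - b / 2 * Bf s0 = 0).
      { apply (deriv_zero_of_zero U nf s0); auto. }
      rewrite B0 in T0 by auto.
      assert (tz s0 = 0).
      { assert (E : f0 s0 * tz s0 = 0) by lra. apply Rmult_integral in E. destruct E; lra. }
      pose proof (Hu3 s0 Hs0) as W. rewrite H, N0, B0 in W by auto. lra.
Qed.

End ODE.

Lemma dot_ext u v u' v' : (forall i, (i < 3)%nat -> u i = u' i) -> (forall i, (i < 3)%nat -> v i = v' i) ->
  dot u v = dot u' v'.
Proof. intros Hu Hv. unfold dot. rewrite !Hu, !Hv by lia. reflexivity. Qed.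

Lemma crs_ext u v u' v' i : (forall i, (i < 3)%nat -> u i = u' i) -> (forall i, (i < 3)%nat -> v i = v' i) ->
  crs u v i = crs u' v' i.
Proof. intros Hu Hv. unfold crs, mk3. rewrite !Hu, !Hv by lia. reflexivity. Qed.

Lemma toframe_scale a b p X r i : lam a p <> 0 -> r <> 0 -> (i < 3)%nat ->
  toframe a b p (fun k => X k / r) i = toframe a b p X i / r.
Proof. intros Hl Hr Hi. destruct i as [|[|[|i]]]; try lia; unfold toframe; field; auto. Qed.

Lemma fromframe_scale a b p c r k : r <> 0 -> (k < 3)%nat ->
  fromframe a b p (fun i => c i / r) k = fromframe a b p c k / r.
Proof. intros Hr Hk. destruct k as [|[|[|k]]]; try lia; unfold fromframe; field; auto. Qed.

Lemma toframe_lin a b p X Y Z i : lam a p <> 0 -> (i < 3)%nat ->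
  toframe a b p (fun l => X l + Y l - Z l) i = toframe a b p X i + toframe a b p Y i - toframe a b p Z i.
Proof. intros Hl Hi. destruct i as [|[|[|i]]]; try lia; unfold toframe; field; auto. Qed.

Lemma toframe_zero a b p X i : (forall l, (l < 3)%nat -> X l = 0) -> (i < 3)%nat -> toframe a b p X i = 0.
Proof.
  intros H Hi. destruct i as [|[|[|i]]]; try lia; unfold toframe; rewrite ?H by lia;
  unfold Rdiv; ring.
Qed.

Lemma dot_nonneg u : 0 <= dot u u.
Proof. unfold dot. nra. Qed.

Section Main.
Variables (a b : R) (lo hi : Rbar) (gam : R -> vec).
Hypothesis Harc : arclength_curve a b lo hi gam.
Hypothesis Htri : triharmonic a b lo hi gam.
Hypothesis Hzt : zero_torsion a b lo hi gam.
Notation I := (inI lo hi).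

Lemma HlamI s : I s -> lam a (gam s) <> 0.
Proof. intros Hs. destruct Harc as [_ [Hd _]]. pose proof (Hd s Hs). unfold inBCV in H. lra. Qed.

Lemma HgamI i : (i < 3)%nat -> smooth (fun s => gam s i) I.
Proof. intros Hi. destruct Harc as [_ [_ [Hs _]]]. apply sm_of_exn. intros; apply Hs; auto. Qed.

Lemma HunitI s : I s -> dot (tf a b gam s) (tf a b gam s) = 1.
Proof.
  intros Hs. destruct Harc as [_ [_ [_ Hu]]]. unfold tf. rewrite <- inner_frame by (apply HlamI; auto).
  apply Hu; auto.
Qed.

Lemma curv_kap s : I s -> curv a b gam s = kap a b gam s.
Proof.
  intros Hs. unfold curv, kap. f_equal. rewrite inner_frame by (apply HlamI; auto).
  apply dot_ext; intros i Hi; apply (toframe_nabT a b gam I (opn_inI lo hi) HlamI HgamI); auto.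
Qed.

Section Sub.
Variables (lo' hi' : Rbar).
Notation J := (inI lo' hi').
Hypothesis HJI : forall s, J s -> I s.
Hypothesis Hnz : forall s, J s -> curv a b gam s <> 0.
Let HJ : opn J := opn_inI lo' hi'.

Lemma HlamJ s : J s -> lam a (gam s) <> 0.
Proof. intros; apply HlamI; auto. Qed.
Lemma HgamJ i : (i < 3)%nat -> smooth (fun s => gam s i) J.
Proof. intros Hi. apply (sm_sub I); auto. apply HgamI; auto. Qed.
Lemma HunitJ s : J s -> dot (tf a b gam s) (tf a b gam s) = 1.
Proof. intros; apply HunitI; auto. Qed.
Lemma HKJ s : J s -> 0 < dot (wf a b gam 1 s) (wf a b gam 1 s).
Proof.
  intros Hs. pose proof (Hnz s Hs) as N. rewrite curv_kap in N by auto. unfold kap in N.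
  pose proof (dot_nonneg (wf a b gam 1 s)). destruct (Rle_lt_or_eq_dec _ _ H); auto.
  rewrite <- e in N. rewrite sqrt_0 in N. lra.
Qed.

Lemma toframe_frN s i : J s -> (i < 3)%nat -> toframe a b (gam s) (frN a b gam s) i = nv a b gam s i.
Proof.
  intros Hs Hi. unfold frN, nv. rewrite toframe_scale; auto.
  - rewrite (toframe_nabT a b gam J HJ HlamJ HgamJ) by auto. rewrite curv_kap by auto. reflexivity.
  - apply HlamJ; auto.
Qed.

Lemma HtorJ s : J s ->
  dot (covF a b (gam s) (tf a b gam s) (nv a b gam s) (dvec (nv a b gam) s)) (crs (tf a b gam s) (nv a b gam s)) = 0.
Proof.
  intros Hs. rewrite <- (Hzt s (HJI s Hs) (Hnz s Hs)). unfold tors.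
  rewrite inner_frame by (apply HlamJ; auto).
  apply dot_ext; intros i Hi.
  - rewrite (cov_frame a b gam (frN a b gam) (nv a b gam) s); auto.
    + apply HlamJ; auto.
    + intros j Hj. apply (sm_ex _ J); auto. apply HgamJ; auto.
    + intros j Hj. apply (exd_nv a b gam J HJ HlamJ HgamJ HKJ); auto.
    + eapply filter_imp; [|exact (HJ s Hs)]. intros u Hu k Hk.
      unfold frN, nv. rewrite fromframe_scale; auto.
      * rewrite (nabT_frame a b gam J HJ HlamJ HgamJ) by auto. rewrite curv_kap by auto. reflexivity.
      * pose proof (kap_pos a b gam J HKJ u Hu). lra.
  - unfold frB. rewrite cross_frame by (auto; apply HlamJ; auto).
    apply crs_ext; intros j Hj; [reflexivity|]. symmetry; apply toframe_frN; auto.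
Qed.

Lemma B3_Bz s : J s -> B3 a b gam s = Bz a b gam s.
Proof.
  intros Hs. unfold B3. rewrite inner_frame by (apply HlamJ; auto).
  assert (E : dot (toframe a b (gam s) (frB a b gam s)) (toframe a b (gam s) E3) =
              toframe a b (gam s) (frB a b gam s) 2%nat).
  { unfold dot. unfold toframe at 2 4 6. unfold E3. simpl. field. apply HlamJ; auto. }
  rewrite E. unfold frB. rewrite cross_frame by (auto; apply HlamJ; auto).
  unfold Bz. apply crs_ext; intros j Hj; [reflexivity|]. apply toframe_frN; auto.
Qed.

Lemma HtriJ s : J s -> forall i, (i < 3)%nat ->
  wf a b gam 5 s i + Rf a b (wf a b gam 3 s) (tf a b gam s) (tf a b gam s) i
  - Rf a b (wf a b gam 2 s) (wf a b gam 1 s) (tf a b gam s) i = 0.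
Proof.
  intros Hs i Hi.
  pose proof (HlamJ s Hs) as Hl.
  assert (Z := toframe_zero a b (gam s) (fun l => nabT a b gam 5 s l + Rm a b (gam s) (nabT a b gam 3 s) (vel gam s) (vel gam s) l - Rm a b (gam s) (nabT a b gam 2 s) (nabT a b gam 1 s) (vel gam s) l) i (Htri s (HJI s Hs)) Hi).
  rewrite toframe_lin in Z by auto.
  rewrite !Rm_frame in Z by auto.
  rewrite (toframe_nabT a b gam J HJ HlamJ HgamJ 5 s Hs i Hi) in Z.
  rewrite <- Z. f_equal; [f_equal|]; apply Rf_lin; auto; intros j Hj;
  first [ symmetry; apply (toframe_nabT a b gam J HJ HlamJ HgamJ); auto | reflexivity ].
Qed.


Lemma local_thm (HD : 4 * a <> b ^ 2) s0 (Hs0 : J s0) : exists k0 c, 0 < k0 /\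
  (forall s, J s -> curv a b gam s = k0 /\ B3 a b gam s = c) /\
  k0 ^ 2 = 2 * (b ^ 2 / 4 + (4 * a - b ^ 2) * c ^ 2) /\ c <> 0.
Proof.
  set (kk := kap a b gam).
  assert (Hd : forall j r, J r -> is_derive (Derive_n kk j) r (Derive_n kk (S j) r))
    by (intros j r Hr; apply (isd a b gam J HJ HlamJ HgamJ HKJ j r Hr)).
  assert (HBd : forall r, J r -> is_derive (Bz a b gam) r (b / 2 * nv a b gam r 2%nat)).
  { intros r Hr. pose proof (Derive_correct _ _ (sm_ex _ J r (Bz_smooth a b gam J HJ HlamJ HgamJ HKJ) Hr)) as D.
    rewrite (dBz a b gam J HJ HlamJ HgamJ HunitJ HKJ HtorJ r Hr) in D. exact D. }
  assert (Hnd : forall r, J r -> is_derive (fun r => nv a b gam r 2%nat) r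
      (- kk r * tf a b gam r 2%nat - b / 2 * Bz a b gam r)).
  { intros r Hr. pose proof (Derive_correct _ _ (sm_ex _ J r (nv_smooth a b gam J HJ HlamJ HgamJ HKJ 2 ltac:(lia)) Hr)) as D.
    rewrite (dn2 a b gam J HJ HlamJ HgamJ HunitJ HKJ HtorJ r Hr) in D. exact D. }
  assert (HS := fun r Hr => scalar_eqs a b gam J HJ HlamJ HgamJ HunitJ HKJ HtorJ r Hr (HtriJ r Hr)).
  destruct (ode_main a b lo' hi' kk (Derive_n kk 1) (Derive_n kk 2) (Derive_n kk 3) (Derive_n kk 4)
     (Bz a b gam) (fun r => nv a b gam r 2%nat) (fun r => tf a b gam r 2%nat) s0 Hs0
     (Hd 0%nat) (Hd 1%nat) (Hd 2%nat) (Hd 3%nat) HBd Hnd (kap_pos a b gam J HKJ)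
     (fun r Hr => proj1 (HS r Hr)) (fun r Hr => proj1 (proj2 (HS r Hr))) (fun r Hr => proj2 (proj2 (HS r Hr)))
     (unit3 a b gam J HJ HlamJ HgamJ HunitJ HKJ) HD) as [k0 [c [Hk0 [Hall [Hrel Hc]]]]].
  exists k0, c. split; [auto|split; [|split; auto]].
  intros s Hs. destruct (Hall s Hs) as [E1 E2]. split.
  - rewrite curv_kap by auto. exact E1.
  - rewrite B3_Bz by auto. exact E2.
Qed.

End Sub.

Lemma g_smooth : smooth (fun s => dot (wf a b gam 1 s) (wf a b gam 1 s)) I.
Proof.
  assert (HU := opn_inI lo hi).
  assert (W0 := wf_smooth a b gam I HU HlamI HgamI 1 0 ltac:(lia)).
  assert (W1 := wf_smooth a b gam I HU HlamI HgamI 1 1 ltac:(lia)).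
  assert (W2 := wf_smooth a b gam I HU HlamI HgamI 1 2 ltac:(lia)).
  unfold dot. smt.
Qed.

Lemma global (HD : 4 * a <> b ^ 2) :
  geodesic a b lo hi gam \/
  exists k0 c, 0 < k0 /\ (forall s, I s -> curv a b gam s = k0) /\ (forall s, I s -> tors a b gam s = 0) /\
    (forall s, I s -> B3 a b gam s = c) /\ k0 ^ 2 = 2 * (b ^ 2 / 4 + (4 * a - b ^ 2) * c ^ 2) /\ c <> 0.
Proof.
  set (g := fun s => dot (wf a b gam 1 s) (wf a b gam 1 s)).
  assert (Hcg : forall s, I s -> curv a b gam s = sqrt (g s)).
  { intros s Hs. rewrite curv_kap by auto. reflexivity. }
  destruct (classic (exists s0, I s0 /\ curv a b gam s0 <> 0)) as [[s0 [Hs0 Hn0]] | Hno].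
  - right.
    assert (Hd : forall s, I s -> is_derive g s 0).
    { intros s Hs. assert (Ex : ex_derive g s) by (apply (sm_ex _ I); auto; apply g_smooth).
      assert (Dg : Derive g s = 0).
      { destruct (Rle_lt_or_eq_dec _ _ (dot_nonneg (wf a b gam 1 s))) as [Hp|Hz].
        - assert (Hloc : locally s (fun x => I x /\ g x <> 0)).
          { apply filter_and. apply (opn_inI lo hi); auto.
            apply (cont_locally_nz g s); [|unfold g; lra].
            apply (@ex_derive_continuous R_AbsRing R_NormedModule). exact Ex. }
          destruct Hloc as [eps Heps].
          set (lo' := Finite (s - eps)). set (hi' := Finite (s + eps)).
          assert (Hball : forall y, inI lo' hi' y -> I y /\ g y <> 0).
          { intros y [Y1 Y2]. apply Heps. unfold ball; simpl. unfold AbsRing_ball, abs, minus, plus, opp; simpl.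
            simpl in Y1, Y2. apply Rabs_def1; lra. }
          assert (HJI : forall y, inI lo' hi' y -> I y) by (intros y Hy; apply Hball; auto).
          assert (Hnz : forall y, inI lo' hi' y -> curv a b gam y <> 0).
          { intros y Hy. destruct (Hball y Hy) as [Iy Gy]. rewrite Hcg by auto. intro Z.
            apply sqrt_eq_0 in Z; [contradiction | apply dot_nonneg]. }
          assert (Hs' : inI lo' hi' s) by (unfold lo', hi'; split; simpl; destruct eps; simpl; lra).
          destruct (local_thm lo' hi' HJI Hnz HD s Hs') as [k0 [c [Hk0 [Hall _]]]].
          apply (Dloc_const (inI lo' hi') g (k0 ^ 2) (opn_inI lo' hi')); auto.
          intros y Hy. destruct (Hall y Hy) as [Cy _]. rewrite Hcg in Cy by auto.
          rewrite <- Cy. simpl. rewrite Rmult_1_r. rewrite sqrt_sqrt; auto. apply dot_nonneg.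
        - rewrite <- (Derive_Reals g s (ex_derive_Reals_0 g s Ex)).
          apply (deriv_minimum g (s - 1) (s + 1) s); try lra.
          intros x _ _. unfold g. rewrite <- Hz. apply dot_nonneg. }
      rewrite <- Dg. apply Derive_correct. exact Ex. }
    assert (Hg0 : 0 < g s0).
    { destruct (Rle_lt_or_eq_dec _ _ (dot_nonneg (wf a b gam 1 s0))) as [Hp|Hz]; [exact Hp|].
      exfalso. apply Hn0. rewrite Hcg by auto. unfold g. rewrite <- Hz. apply sqrt_0. }
    assert (Hnz : forall s, I s -> curv a b gam s <> 0).
    { intros s Hs. rewrite Hcg by auto. rewrite (const_on lo hi g Hd s s0 Hs Hs0).
      pose proof (sqrt_lt_R0 _ Hg0). lra. }
    destruct (local_thm lo hi (fun s Hs => Hs) Hnz HD s0 Hs0) as [k0 [c [Hk0 [Hall [Hrel Hc]]]]].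
    exists k0, c. refine (conj Hk0 (conj _ (conj _ (conj _ (conj Hrel Hc))))).
    + intros s Hs. apply Hall; auto.
    + intros s Hs. apply Hzt; auto.
    + intros s Hs. apply Hall; auto.
  - left. intros s Hs l Hl.
    assert (Z : g s = 0).
    { apply sqrt_eq_0. apply dot_nonneg. rewrite <- Hcg by auto.
      apply NNPP. intro N. apply Hno. exists s. auto. }
    assert (W : forall i, (i < 3)%nat -> wf a b gam 1 s i = 0).
    { intros i Hi. unfold g, dot in Z.
      assert (wf a b gam 1 s 0%nat = 0 /\ wf a b gam 1 s 1%nat = 0 /\ wf a b gam 1 s 2%nat = 0) as [Z0 [Z1 Z2]] by
        (repeat split; nra).
      destruct i as [|[|[|i]]]; try lia; auto. }
    rewrite (nabT_frame a b gam I (opn_inI lo hi) HlamI HgamI 1 s Hs l Hl).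
    destruct l as [|[|[|l]]]; try lia; unfold fromframe; rewrite ?W by lia; ring.
Qed.

End Main.

Theorem theorem4p6 :
  (forall (a b : R) (lo hi : Rbar) (gam : R -> vec),
     4 * a <> b ^ 2 ->
     arclength_curve a b lo hi gam ->
     triharmonic a b lo hi gam ->
     zero_torsion a b lo hi gam ->
     geodesic a b lo hi gam \/
     exists k0 c : R,
       0 < k0 /\
       (forall s, inI lo hi s -> curv a b gam s = k0) /\
       (forall s, inI lo hi s -> tors a b gam s = 0) /\
       (forall s, inI lo hi s -> B3 a b gam s = c) /\
       k0 ^ 2 = 2 * (b ^ 2 / 4 + (4 * a - b ^ 2) * c ^ 2) /\
       (b ^ 2 > 4 * a -> c ^ 2 < b ^ 2 / (4 * (b ^ 2 - 4 * a))) /\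
       (b ^ 2 < 4 * a -> c <> 0)) /\
  (forall (a : R) (lo hi : Rbar) (gam : R -> vec),
     a < 0 ->
     arclength_curve a 0 lo hi gam ->
     triharmonic a 0 lo hi gam ->
     zero_torsion a 0 lo hi gam ->
     geodesic a 0 lo hi gam).
Proof.
  assert (P1 : forall (a b : R) (lo hi : Rbar) (gam : R -> vec),
     4 * a <> b ^ 2 ->
     arclength_curve a b lo hi gam ->
     triharmonic a b lo hi gam ->
     zero_torsion a b lo hi gam ->
     geodesic a b lo hi gam \/
     exists k0 c : R,
       0 < k0 /\
       (forall s, inI lo hi s -> curv a b gam s = k0) /\
       (forall s, inI lo hi s -> tors a b gam s = 0) /\
       (forall s, inI lo hi s -> B3 a b gam s = c) /\
       k0 ^ 2 = 2 * (b ^ 2 / 4 + (4 * a - b ^ 2) * c ^ 2) /\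
       (b ^ 2 > 4 * a -> c ^ 2 < b ^ 2 / (4 * (b ^ 2 - 4 * a))) /\
       (b ^ 2 < 4 * a -> c <> 0)).
  { intros a b lo hi gam HD Harc Htri Hzt.
    destruct (global a b lo hi gam Harc Htri Hzt HD) as [G|[k0 [c [Hk0 [Hc1 [Ht [HB3 [Hrel Hc]]]]]]]].
    - left; exact G.
    - right. exists k0, c.
      refine (conj Hk0 (conj Hc1 (conj Ht (conj HB3 (conj Hrel (conj _ (fun _ => Hc))))))).
      intros Hgt.
      assert (Hp : 0 < 4 * (b ^ 2 - 4 * a)) by lra.
      assert (Hk2 : 0 < k0 ^ 2) by (apply pow_lt; lra).
      replace (b ^ 2 / (4 * (b ^ 2 - 4 * a))) with (c ^ 2 + (b ^ 2 - 4 * (b ^ 2 - 4 * a) * c ^ 2) / (4 * (b ^ 2 - 4 * a)))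
        by (field; lra).
      assert (0 < (b ^ 2 - 4 * (b ^ 2 - 4 * a) * c ^ 2) / (4 * (b ^ 2 - 4 * a))).
      { apply Rdiv_lt_0_compat; auto. lra. }
      lra. }
  split; [exact P1|].
  intros a lo hi gam Ha Harc Htri Hzt.
  destruct (P1 a 0 lo hi gam ltac:(intro; lra) Harc Htri Hzt) as [G|[k0 [c [Hk0 [_ [_ [_ [Hrel _]]]]]]]]; auto.
  exfalso. assert (0 < k0 ^ 2) by (apply pow_lt; lra).
  assert (0 <= c ^ 2) by (apply pow2_ge_0). nra.
Qed.
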